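(* Let $\Delta_{-1}=\sum_{i=1}^n\sum_{s\ge1}(u^i-\lambda)f^i\,\theta_i^{s+1}\frac{\partial}{\partial u^{i,s}}$, a differential on $\hat{\mathcal A}[\lambda]$. Every element of $\hat{\mathcal C}[\lambda]$ and every element of $\hat d_i(\hat{\mathcal C}_i)\subset\hat{\mathcal A}$ ($i=1,\dots,n$) is a $\Delta_{-1}$-cocycle, and the inclusion of $\hat{\mathcal C}[\lambda]\oplus\bigoplus_{i=1}^n\hat d_i(\hat{\mathcal C}_i)$ into the cocycles induces an isomorphism $H(\hat{\mathcal A}[\lambda],\Delta_{-1})\cong\hat{\mathcal C}[\lambda]\oplus\bigoplus_{i=1}^n\operatorname{im}\big(\hat d_i:\hat{\mathcal C}_i\to\hat{\mathcal C}_i\big).$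
   Context: Let $n\ge1$, $U\subset\mathbb R^n$ a domain with coordinates $u^1,\dots,u^n$ with $u^i\neq u^j$ on $U$ for $i\ne j$, and $f^1,\dots,f^n$ smooth nowhere-vanishing functions on $U$. Let $\hat{\mathcal A}=C^\infty(U)[[u^{i,s}\ (1\le i\le n,\ s\ge1);\ \theta_i^s\ (1\le i\le n,\ s\ge0)]]$ with $u^{i,s}$ even and $\theta_i^s$ odd formal variables, graded by the standard degree $\deg u^{i,s}=\deg\theta_i^s=s$ (functions on $U$ of degree 0), and let $\hat{\mathcal A}[\lambda]$ be polynomials in an even formal variable $\lambda$ with coefficients in $\hat{\mathcal A}$. Define $\hat{\mathcal C}=C^\infty(U)[[\theta_1^0,\dots,\theta_n^0,\theta_1^1,\dots,\theta_n^1]]\subset\hat{\mathcal A}$ and, for each $i$, $\hat{\mathcal C}_i=\hat{\mathcal C}[[u^{i,s},\theta_i^{s+1}:s\ge1]]\subset\hat{\mathcal A}$ (only the variables with this fixed index $i$ are adjoined). On $\hat{\mathcal C}_i$ let $\hat d_i=\sum_{s\ge1}\theta_i^{s+1}\frac{\partial}{\partial u^{i,s}}$. *)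

(* Defs.v *)
From Stdlib Require Import Reals List Arith Bool.
Open Scope bool_scope.
Import ListNotations.
Open Scope R_scope.

(* A point of R^n is a function nat -> R vanishing at coordinates >= n;
   coordinates are 0-based: u^(i+1) of the paper is  p i. *)
Definition point := nat -> R.
Definition inRn (n : nat) (p : point) : Prop := forall k, (n <= k)%nat -> p k = 0.

Definition is_open (n : nat) (V : point -> Prop) : Prop :=
  forall x, V x -> exists r, 0 < r /\
    forall y, inRn n y -> (forall k, (k < n)%nat -> Rabs (y k - x k) < r) -> V y.

Definition is_connected (n : nat) (U : point -> Prop) : Prop :=
  forall V W : point -> Prop, is_open n V -> is_open n W ->
    (forall x, U x -> V x \/ W x) ->
    (forall x, U x -> V x -> W x -> False) ->
    (exists x, U x /\ V x) -> (exists x, U x /\ W x) -> False.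

Definition is_domain (n : nat) (U : point -> Prop) : Prop :=
  (forall p, U p -> inRn n p) /\ is_open n U /\ is_connected n U.

Definition upd (x : point) (k : nat) (t : R) : point :=
  fun j => if Nat.eqb j k then t else x j.

Definition cont_at (n : nat) (g : point -> R) (x : point) : Prop :=
  forall eps, 0 < eps -> exists del, 0 < del /\
    forall y, inRn n y -> (forall k, (k < n)%nat -> Rabs (y k - x k) < del) ->
      Rabs (g y - g x) < eps.

(* g is C^infinity on U: there is a family D ds of functions (D ds is the
   iterated partial derivative along the list of directions ds), all
   continuous on U, with D [] = g on U and D (k :: ds) = d/dx_k (D ds) on U. *)
Definition smooth_on (n : nat) (U : point -> Prop) (g : point -> R) : Prop :=
  exists D : list nat -> point -> R,
    (forall x, U x -> D nil x = g x) /\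
    (forall ds x, U x -> cont_at n (D ds) x) /\
    (forall ds k x, (k < n)%nat -> U x ->
       derivable_pt_lim (fun t => D ds (upd x k t)) (x k) (D (k :: ds) x)).

(* Variables are indexed by pairs (i, s):  (i,s) in the even part stands for
   u^{i,s} (s >= 1), (i,s) in the odd part for theta_i^s (s >= 0); i < n.
   A monomial is (E, O): E = sorted (nondecreasing, lexicographic) list of
   even variables with repetition (a multiset), O = strictly increasing list
   of odd variables; it stands for  (prod E) * theta_{O_0} theta_{O_1} ... *)
Definition var := (nat * nat)%type.
Definition Mon := (list var * list var)%type.

Definition pltb (a b : var) : bool :=
  Nat.ltb (fst a) (fst b) || (Nat.eqb (fst a) (fst b) && Nat.ltb (snd a) (snd b)).
Definition pleb (a b : var) : bool :=
  pltb a b || (Nat.eqb (fst a) (fst b) && Nat.eqb (snd a) (snd b)).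

Fixpoint sortedb (r : var -> var -> bool) (l : list var) : bool :=
  match l with
  | x :: ((y :: _) as t) => r x y && sortedb r t
  | _ => true
  end.

Definition validM (n : nat) (m : Mon) : Prop :=
  sortedb pleb (fst m) = true /\ sortedb pltb (snd m) = true /\
  Forall (fun v => (fst v < n)%nat /\ (1 <= snd v)%nat) (fst m) /\
  Forall (fun v => (fst v < n)%nat) (snd m).

Fixpoint insE (v : var) (E : list var) : list var :=
  match E with
  | [] => [v]
  | w :: E' => if pleb v w then v :: E else w :: insE v E'
  end.

Fixpoint cnt (v : var) (E : list var) : nat :=
  match E with
  | [] => 0
  | w :: E' => (if Nat.eqb (fst v) (fst w) && Nat.eqb (snd v) (snd w) then 1 else 0) + cnt v E'
  end.

Fixpoint remove_nth (j : nat) (l : list var) : list var :=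
  match j, l with
  | _, [] => []
  | O, _ :: l' => l'
  | S j', x :: l' => x :: remove_nth j' l'
  end.

Fixpoint sumR (k : nat) (F : nat -> R) : R :=
  match k with O => 0 | S k' => sumR k' F + F k' end.

(* An element of \hat A is given by its coefficients (functions on U) at all
   monomials; since each degree contains finitely many monomials, arbitrary
   coefficient families are exactly the elements of the graded completion.
   An element of \hat A[lambda] is given by its lambda-coefficients. *)
Definition coef := point -> R.
Definition elA := Mon -> coef.
Definition elAl := nat -> elA.

Definition zeroA : elA := fun _ _ => 0.
Definition zeroAl : elAl := fun _ => zeroA.

Definition eqA (n : nat) (U : point -> Prop) (x y : elA) : Prop :=
  forall m, validM n m -> forall p, U p -> x m p = y m p.
Definition eqAl (n : nat) (U : point -> Prop) (x y : elAl) : Prop :=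
  forall k, eqA n U (x k) (y k).

Definition inA (n : nat) (U : point -> Prop) (x : elA) : Prop :=
  forall m, validM n m -> smooth_on n U (x m).
Definition inAl (n : nat) (U : point -> Prop) (x : elAl) : Prop :=
  (exists N, forall k, (N <= k)%nat -> eqA n U (x k) zeroA) /\
  (forall k, inA n U (x k)).

(* \hat C = C^oo(U)[[theta_j^0, theta_j^1]] *)
Definition inC (n : nat) (U : point -> Prop) (x : elA) : Prop :=
  inA n U x /\
  forall m, validM n m ->
    ~ (fst m = [] /\ Forall (fun v => (snd v <= 1)%nat) (snd m)) ->
    forall p, U p -> x m p = 0.
Definition inCl (n : nat) (U : point -> Prop) (x : elAl) : Prop :=
  inAl n U x /\ forall k, inC n U (x k).

(* \hat C_i = \hat C[[u^{i,s}, theta_i^{s+1} : s >= 1]] *)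
Definition inCi (n : nat) (U : point -> Prop) (i : nat) (x : elA) : Prop :=
  inA n U x /\
  forall m, validM n m ->
    ~ (Forall (fun v => fst v = i) (fst m) /\
       Forall (fun v => (snd v <= 1)%nat \/ fst v = i) (snd m)) ->
    forall p, U p -> x m p = 0.

(* d_i = sum_{s>=1} theta_i^{s+1} d/du^{i,s}  (left multiplication by theta,
   reordering the odd variables with the Koszul sign). *)
Definition dop (i : nat) (x : elA) : elA :=
  fun m p =>
    let E := fst m in let Od := snd m in
    sumR (length Od) (fun j =>
      let v := nth j Od (0%nat, 0%nat) in
      if Nat.eqb (fst v) i && Nat.leb 2 (snd v) then
        (-1) ^ j * INR (cnt (i, (snd v - 1)%nat) E + 1) *
        x (insE (i, (snd v - 1)%nat) E, remove_nth j Od) p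
      else 0).

(* Delta_{-1} = sum_i (u^i - lambda) f^i d_i on \hat A[lambda] *)
Definition DeltaM1 (n : nat) (f : nat -> coef) (x : elAl) : elAl :=
  fun k m p =>
    sumR n (fun i => f i p *
      (p i * dop i (x k) m p -
       match k with O => 0 | S k' => dop i (x k') m p end)).

Definition constL (a : elA) : elAl :=
  fun k => match k with O => a | S _ => zeroA end.

Definition combo (n : nat) (c : elAl) (y : nat -> elA) : elAl :=
  fun k m p => c k m p + constL (fun m' p' => sumR n (fun i => dop i (y i) m' p')) k m p.

Definition addAl (x y : elAl) : elAl := fun k m p => x k m p + y k m p.

(* Main.v *)
Require Import Defs.
From Stdlib Require Import Reals List Arith Lia Bool Lra Classical FunctionalExtensionality.
Import ListNotations.
Open Scope R_scope.

Definition veqb (a b : var) : bool := Nat.eqb (fst a) (fst b) && Nat.eqb (snd a) (snd b).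

Lemma veqb_true a b : veqb a b = true <-> a = b.
Proof.
  destruct a as [a1 a2], b as [b1 b2]; unfold veqb; simpl.
  rewrite andb_true_iff, !Nat.eqb_eq; split.
  - intros [-> ->]; auto.
  - intros H; inversion H; auto.
Qed.

Lemma veqb_refl a : veqb a a = true.
Proof. apply veqb_true; auto. Qed.

Lemma veqb_false a b : veqb a b = false <-> a <> b.
Proof.
  split; intros H.
  - intros E; subst; rewrite veqb_refl in H; discriminate.
  - destruct (veqb a b) eqn:E; auto. apply veqb_true in E; contradiction.
Qed.

Lemma veqb_sym a b : veqb a b = veqb b a.
Proof.
  destruct (veqb a b) eqn:E; symmetry.
  - apply veqb_true in E; subst; apply veqb_refl.
  - apply veqb_false in E; apply veqb_false; auto.
Qed.

Lemma veq_dec (a b : var) : {a = b} + {a <> b}.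
Proof. destruct (veqb a b) eqn:E; [left; apply veqb_true; auto | right; apply veqb_false; auto]. Qed.

Lemma pltb_iff a b : pltb a b = true <-> (fst a < fst b \/ (fst a = fst b /\ snd a < snd b))%nat.
Proof.
  unfold pltb; rewrite orb_true_iff, andb_true_iff, !Nat.ltb_lt, Nat.eqb_eq; tauto.
Qed.

Lemma pltb_irrefl a : pltb a a = false.
Proof. destruct (pltb a a) eqn:E; auto. apply pltb_iff in E; lia. Qed.

Lemma pltb_trans a b c : pltb a b = true -> pltb b c = true -> pltb a c = true.
Proof. rewrite !pltb_iff; lia. Qed.

Lemma pltb_asym a b : pltb a b = true -> pltb b a = false.
Proof. intros H; destruct (pltb b a) eqn:E; auto. rewrite pltb_iff in *; lia. Qed.

Lemma pltb_total a b : a <> b -> pltb a b = true \/ pltb b a = true.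
Proof.
  intros H; destruct a as [a1 a2], b as [b1 b2]; rewrite !pltb_iff; simpl.
  destruct (Nat.eq_dec a1 b1); destruct (Nat.eq_dec a2 b2); subst; try congruence; lia.
Qed.

Lemma pleb_iff a b : pleb a b = true <-> pltb a b = true \/ a = b.
Proof.
  unfold pleb; rewrite orb_true_iff, andb_true_iff, !Nat.eqb_eq.
  destruct a as [a1 a2], b as [b1 b2]; simpl; split.
  - intros [H|[-> ->]]; auto.
  - intros [H|H]; auto. inversion H; auto.
Qed.

Lemma pleb_trans a b c : pleb a b = true -> pleb b c = true -> pleb a c = true.
Proof.
  rewrite !pleb_iff; intros [H|H] [H'|H']; subst; auto. left; eapply pltb_trans; eauto.
Qed.

Lemma pleb_antisym a b : pleb a b = true -> pleb b a = true -> a = b.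
Proof.
  rewrite !pleb_iff; intros [H|H] [H'|H']; auto.
  rewrite (pltb_asym _ _ H) in H'; discriminate.
Qed.

Lemma pleb_total a b : pleb a b = false -> pltb b a = true.
Proof.
  intros H. destruct (veq_dec a b). { subst. unfold pleb in H. rewrite !Nat.eqb_refl in H.
  rewrite orb_true_r in H; discriminate. }
  destruct (pltb_total a b n) as [H'|H']; auto.
  unfold pleb in H; rewrite H' in H; discriminate.
Qed.

Lemma sorted_cons (r : var -> var -> bool) (rt : forall a b c, r a b = true -> r b c = true -> r a c = true) a l :
  sortedb r (a :: l) = true <-> sortedb r l = true /\ Forall (fun x => r a x = true) l.
Proof.
  revert a; induction l as [|b l IH]; intros a; simpl.
  - split; auto.
  - rewrite andb_true_iff. split.
    + intros [H1 H2]. split; auto. constructor; auto.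
      fold (sortedb r (b :: l)) in H2. apply IH in H2. destruct H2 as [_ H2].
      eapply Forall_impl; [|exact H2]. intros x Hx; eauto.
    + intros [H1 H2]. inversion H2; subst. split; auto.
Qed.

Lemma pleb_sorted_cons a l : sortedb pleb (a :: l) = true <-> sortedb pleb l = true /\ Forall (fun x => pleb a x = true) l.
Proof. apply sorted_cons. apply pleb_trans. Qed.
Lemma pltb_sorted_cons a l : sortedb pltb (a :: l) = true <-> sortedb pltb l = true /\ Forall (fun x => pltb a x = true) l.
Proof. apply sorted_cons. apply pltb_trans. Qed.

Lemma pltb_sorted_pleb l : sortedb pltb l = true -> sortedb pleb l = true.
Proof.
  induction l as [|a l IH]; auto. rewrite pltb_sorted_cons, pleb_sorted_cons. intros [H1 H2]; split; auto.
  eapply Forall_impl; [|exact H2]. intros x Hx; apply pleb_iff; auto.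
Qed.

Fixpoint cntP (P : var -> bool) (l : list var) : nat :=
  match l with [] => 0%nat | a :: t => ((if P a then 1 else 0) + cntP P t)%nat end.

Lemma cnt_cntP v l : cnt v l = cntP (veqb v) l.
Proof. induction l; simpl; auto. Qed.

Lemma cntP_ext P Q l : (forall x, In x l -> P x = Q x) -> cntP P l = cntP Q l.
Proof. induction l as [|a l IH]; simpl; auto. intros H. rewrite H, IH; auto. Qed.

Lemma cntP_app P l1 l2 : cntP P (l1 ++ l2) = (cntP P l1 + cntP P l2)%nat.
Proof. induction l1; simpl; lia. Qed.

Lemma cntP_zero P l : cntP P l = 0%nat <-> Forall (fun x => P x = false) l.
Proof.
  induction l as [|a l IH]; simpl. split; auto.
  destruct (P a) eqn:E; split; intros H; try lia.
  - inversion H; congruence.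
  - constructor; auto; apply IH; auto.
  - inversion H; apply IH; auto.
Qed.

Lemma cntP_pos P l : (0 < cntP P l)%nat <-> exists x, In x l /\ P x = true.
Proof.
  induction l as [|a l IH]; simpl. split; [lia| intros [x [[] _]]].
  destruct (P a) eqn:E; split; intros H.
  - eauto.
  - lia.
  - apply IH in H. destruct H as [x [H1 H2]]; eauto.
  - apply IH. destruct H as [x [[H1|H1] H2]]; subst; eauto. congruence.
Qed.

Lemma cntP_insE P v l : cntP P (insE v l) = ((if P v then 1 else 0) + cntP P l)%nat.
Proof.
  induction l as [|a l IH]; simpl; auto. destruct (pleb v a); simpl; auto. rewrite IH; lia.
Qed.

Lemma In_insE x v l : In x (insE v l) <-> x = v \/ In x l.
Proof.
  induction l as [|a l IH]; simpl. split; intros; intuition (subst; auto).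
  destruct (pleb v a); simpl. split; intros; intuition (subst; auto). rewrite IH; split; intros; intuition (subst; auto).
Qed.

Lemma insE_sorted v l : sortedb pleb l = true -> sortedb pleb (insE v l) = true.
Proof.
  induction l as [|a l IH]; simpl; auto. intros H.
  destruct (pleb v a) eqn:E.
  - apply pleb_sorted_cons; split; auto. apply pleb_sorted_cons in H. destruct H as [_ H].
    constructor; auto. eapply Forall_impl; [|exact H]. intros x Hx; eapply pleb_trans; eauto.
  - apply pleb_sorted_cons in H; destruct H as [H1 H2]. apply pleb_sorted_cons; split; auto.
    apply Forall_forall; intros x Hx. apply In_insE in Hx. destruct Hx as [->|Hx].
    + apply pleb_iff; left; apply pleb_total; auto.
    + rewrite Forall_forall in H2; auto.
Qed.

Lemma insE_strict v l : sortedb pltb l = true -> ~ In v l -> sortedb pltb (insE v l) = true.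
Proof.
  induction l as [|a l IH]; simpl; auto. intros H Hn.
  apply pltb_sorted_cons in H; destruct H as [H1 H2].
  destruct (pleb v a) eqn:E.
  - apply pltb_sorted_cons; split; auto. apply pltb_sorted_cons; split; auto.
    apply pleb_iff in E. destruct E as [E|E]; [|subst; tauto].
    constructor; auto. eapply Forall_impl; [|exact H2]. intros x Hx; eapply pltb_trans; eauto.
  - apply pltb_sorted_cons; split; auto.
    apply Forall_forall; intros x Hx. apply In_insE in Hx. destruct Hx as [->|Hx].
    + apply pleb_total; auto.
    + rewrite Forall_forall in H2; auto.
Qed.

Fixpoint remE (w : var) (l : list var) : list var :=
  match l with [] => [] | a :: t => if veqb w a then t else a :: remE w t end.

Lemma cntP_remE P w l : In w l -> cntP P (remE w l) = (cntP P l - (if P w then 1 else 0))%nat.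
Proof.
  induction l as [|a l IH]; simpl. tauto. intros H.
  destruct (veqb w a) eqn:E.
  - apply veqb_true in E; subst. destruct (P a); lia.
  - apply veqb_false in E. destruct H as [H|H]; [congruence|]. simpl. rewrite IH; auto.
    assert (cntP P l >= (if P w then 1 else 0))%nat.
    { destruct (P w) eqn:Pw; [|lia]. assert (0 < cntP P l)%nat; [apply cntP_pos; eauto|lia]. }
    destruct (P a); lia.
Qed.

Lemma In_remE x w l : In x (remE w l) -> In x l.
Proof. induction l as [|a l IH]; simpl; auto. destruct (veqb w a); simpl; tauto. Qed.

Lemma remE_sorted w l : sortedb pleb l = true -> sortedb pleb (remE w l) = true.
Proof.
  induction l as [|a l IH]; simpl; auto. intros H. apply pleb_sorted_cons in H; destruct H as [H1 H2].
  destruct (veqb w a); auto. apply pleb_sorted_cons; split; auto.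
  rewrite Forall_forall in *; intros x Hx; apply H2; eapply In_remE; eauto.
Qed.

Definition delO (v : var) (l : list var) : list var := filter (fun o => negb (veqb v o)) l.

Lemma cntP_delO P v l : cntP P (delO v l) = cntP (fun o => P o && negb (veqb v o)) l.
Proof.
  induction l as [|a l IH]; unfold delO in *; simpl; auto. destruct (veqb v a); simpl; destruct (P a); simpl; lia.
Qed.

Lemma In_delO x v l : In x (delO v l) <-> In x l /\ x <> v.
Proof.
  unfold delO; rewrite filter_In. rewrite negb_true_iff, veqb_false. split; intros [H1 H2]; split; auto.
Qed.

Lemma filter_sorted (r : var -> var -> bool) (rt : forall a b c, r a b = true -> r b c = true -> r a c = true) Q l :
  sortedb r l = true -> sortedb r (filter Q l) = true.
Proof.
  induction l as [|a l IH]; simpl; auto. intros H. apply (sorted_cons r rt) in H; destruct H as [H1 H2].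
  destruct (Q a); auto. apply (sorted_cons r rt); split; auto.
  rewrite Forall_forall in *; intros x Hx; apply filter_In in Hx; apply H2; tauto.
Qed.

Lemma delO_strict v l : sortedb pltb l = true -> sortedb pltb (delO v l) = true.
Proof. apply filter_sorted, pltb_trans. Qed.
Lemma delO_sorted v l : sortedb pleb l = true -> sortedb pleb (delO v l) = true.
Proof. apply filter_sorted, pleb_trans. Qed.

Lemma sorted_unique l1 l2 : sortedb pleb l1 = true -> sortedb pleb l2 = true ->
  (forall u, cnt u l1 = cnt u l2) -> l1 = l2.
Proof.
  revert l2; induction l1 as [|a l1 IH]; intros [|b l2] H1 H2 Hc.
  - auto.
  - specialize (Hc b); rewrite !cnt_cntP in Hc; simpl in Hc; rewrite veqb_refl in Hc; simpl in Hc; lia.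
  - specialize (Hc a); rewrite !cnt_cntP in Hc; simpl in Hc; rewrite veqb_refl in Hc; simpl in Hc; lia.
  - apply pleb_sorted_cons in H1; apply pleb_sorted_cons in H2.
    destruct H1 as [H1 F1]; destruct H2 as [H2 F2].
    assert (ab : a = b).
    { apply pleb_antisym.
      - destruct (veq_dec a b) as [->|Hne]; [apply pleb_iff; auto|].
        assert (Hb : In b (a :: l1)).
        { assert (0 < cntP (veqb b) (a :: l1))%nat.
          { rewrite <- cnt_cntP, Hc, cnt_cntP. simpl. rewrite veqb_refl; simpl; lia. }
          apply cntP_pos in H. destruct H as [x [Hx Hx']]. apply veqb_true in Hx'; subst; auto. }
        destruct Hb as [Hb|Hb]; [congruence|]. rewrite Forall_forall in F1; auto.
      - destruct (veq_dec a b) as [->|Hne]; [apply pleb_iff; auto|].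
        assert (Ha : In a (b :: l2)).
        { assert (0 < cntP (veqb a) (b :: l2))%nat.
          { rewrite <- cnt_cntP, <- Hc, cnt_cntP. simpl. rewrite veqb_refl; simpl; lia. }
          apply cntP_pos in H. destruct H as [x [Hx Hx']]. apply veqb_true in Hx'; subst; auto. }
        destruct Ha as [Ha|Ha]; [congruence|]. rewrite Forall_forall in F2; auto. }
    subst. f_equal. apply IH; auto. intros u; specialize (Hc u). rewrite !cnt_cntP in *. simpl in Hc. lia.
Qed.

Lemma strict_nodup_cnt v l : sortedb pltb l = true -> (cnt v l <= 1)%nat.
Proof.
  induction l as [|a l IH]; simpl. lia. intros H. apply pltb_sorted_cons in H; destruct H as [H1 H2].
  destruct (Nat.eqb (fst v) (fst a) && Nat.eqb (snd v) (snd a)) eqn:E.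
  - fold (veqb v a) in E. apply veqb_true in E; subst.
    assert (cnt a l = 0%nat); [|lia]. rewrite cnt_cntP. apply cntP_zero.
    rewrite Forall_forall in *; intros x Hx. apply veqb_false. intros ->. specialize (H2 x Hx).
    rewrite pltb_irrefl in H2; discriminate.
  - simpl; auto.
Qed.

Lemma cnt_pos_In v l : (0 < cnt v l)%nat <-> In v l.
Proof.
  rewrite cnt_cntP, cntP_pos. split.
  - intros [x [Hx Hx']]; apply veqb_true in Hx'; subst; auto.
  - intros H; exists v; split; auto; apply veqb_refl.
Qed.

Lemma cnt_insE u v l : cnt u (insE v l) = ((if veqb u v then 1 else 0) + cnt u l)%nat.
Proof. rewrite !cnt_cntP, cntP_insE; auto. Qed.

Lemma cnt_remE u w l : In w l -> cnt u (remE w l) = (cnt u l - (if veqb u w then 1 else 0))%nat.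
Proof. intros H; rewrite !cnt_cntP, cntP_remE; auto. Qed.

Lemma cnt_delO u v l : cnt u (delO v l) = (if veqb u v then 0 else cnt u l)%nat.
Proof.
  rewrite !cnt_cntP, cntP_delO. destruct (veqb u v) eqn:E.
  - apply veqb_true in E; subst. apply cntP_zero, Forall_forall. intros x _.
    destruct (veqb v x); auto.
  - apply cntP_ext. intros x _. destruct (veqb u x) eqn:E2; simpl; auto.
    apply veqb_true in E2; subst. rewrite veqb_sym, E; auto.
Qed.


Definition inb (v : var) (l : list var) : bool := Nat.ltb 0 (cnt v l).

Lemma inb_true v l : inb v l = true <-> In v l.
Proof. unfold inb; rewrite Nat.ltb_lt; apply cnt_pos_In. Qed.
Lemma inb_false v l : inb v l = false <-> ~ In v l.
Proof. rewrite <- inb_true. destruct (inb v l); split; congruence. Qed.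

Definition ltc (v : var) (O : list var) : nat := cntP (fun o => pltb o v) O.
Definition sg (k : nat) : R := (-1) ^ k.

Lemma sg_S k : sg (S k) = - sg k.
Proof. unfold sg; simpl; ring. Qed.
Lemma sg_sq k : sg k * sg k = 1.
Proof. unfold sg. rewrite <- pow_add. replace (k + k)%nat with (2 * k)%nat by lia.
  rewrite pow_mult. replace ((-1)^2) with 1 by ring. apply pow1. Qed.

Definition opA (v w : var) (x : elA) : elA := fun m p =>
  if inb v (snd m) then sg (ltc v (snd m)) * INR (cnt w (fst m) + 1) * x (insE w (fst m), delO v (snd m)) p
  else 0.
Definition opB (w v : var) (x : elA) : elA := fun m p =>
  if inb w (fst m) && negb (inb v (snd m)) then sg (ltc v (snd m)) * x (remE w (fst m), insE v (snd m)) p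
  else 0.

Definition wf (m : Mon) : Prop := sortedb pleb (fst m) = true /\ sortedb pltb (snd m) = true.

Lemma cntP_split P v l : cntP P l = (cntP (fun o => P o && negb (veqb v o)) l + (if P v then cnt v l else 0))%nat.
Proof.
  rewrite cnt_cntP. induction l as [|a l IH]; cbn [cntP]. destruct (P v); auto.
  rewrite IH. destruct (veqb v a) eqn:E.
  - pose proof E as E'. apply veqb_true in E'; subst. destruct (P a); simpl; lia.
  - destruct (P a); simpl; lia.
Qed.

Lemma ltc_delO v v' O : ltc v O = (ltc v (delO v' O) + (if pltb v' v then cnt v' O else 0))%nat.
Proof. unfold ltc. rewrite cntP_delO. apply (cntP_split (fun o => pltb o v) v'). Qed.

Lemma ltc_insE v v' O : ltc v (insE v' O) = ((if pltb v' v then 1 else 0) + ltc v O)%nat.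
Proof. unfold ltc; rewrite cntP_insE; reflexivity. Qed.

Lemma ltc_delO_self v O : ltc v (delO v O) = ltc v O.
Proof. rewrite (ltc_delO v v O), pltb_irrefl; lia. Qed.

Lemma ltc_insE_self v O : ltc v (insE v O) = ltc v O.
Proof. rewrite ltc_insE, pltb_irrefl; lia. Qed.

Lemma inb_delO u v l : u <> v -> inb u (delO v l) = inb u l.
Proof. intros H. unfold inb. rewrite cnt_delO. apply veqb_false in H. rewrite H; auto. Qed.
Lemma inb_delO_self v l : inb v (delO v l) = false.
Proof. unfold inb. rewrite cnt_delO, veqb_refl; auto. Qed.
Lemma inb_insE u v l : u <> v -> inb u (insE v l) = inb u l.
Proof. intros H. unfold inb. rewrite cnt_insE. apply veqb_false in H. rewrite H; auto. Qed.
Lemma inb_insE_self v l : inb v (insE v l) = true.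
Proof. unfold inb. rewrite cnt_insE, veqb_refl; auto. Qed.

Lemma strict_cnt1 v O : sortedb pltb O = true -> inb v O = true -> cnt v O = 1%nat.
Proof. intros H1 H2. unfold inb in H2. apply Nat.ltb_lt in H2. pose proof (strict_nodup_cnt v O H1). lia. Qed.

Lemma INR_cnt_remE u w l : In w l -> veqb u w = false -> cnt u (remE w l) = cnt u l.
Proof. intros H1 H2. rewrite cnt_remE, H2; auto; lia. Qed.

Lemma insE_comm a b E : sortedb pleb E = true -> insE a (insE b E) = insE b (insE a E).
Proof.
  intros H. apply sorted_unique; repeat apply insE_sorted; auto.
  intros u. rewrite !cnt_insE. lia.
Qed.

Lemma delO_comm a b O : sortedb pltb O = true -> delO a (delO b O) = delO b (delO a O).
Proof.
  intros H. apply pltb_sorted_pleb in H. apply sorted_unique; repeat apply delO_sorted; auto.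
  intros u. rewrite !cnt_delO. destruct (veqb u a), (veqb u b); auto.
Qed.

Lemma remE_insE w E : sortedb pleb E = true -> remE w (insE w E) = E.
Proof.
  intros H. apply sorted_unique; auto. apply remE_sorted, insE_sorted; auto.
  intros u. rewrite cnt_remE; [|apply In_insE; auto]. rewrite cnt_insE. destruct (veqb u w); lia.
Qed.

Lemma insE_remE w E : sortedb pleb E = true -> In w E -> insE w (remE w E) = E.
Proof.
  intros H Hw. apply sorted_unique; auto. apply insE_sorted, remE_sorted; auto.
  intros u. rewrite cnt_insE, cnt_remE; auto. destruct (veqb u w) eqn:E1; [|lia].
  apply veqb_true in E1; subst. apply cnt_pos_In in Hw. lia.
Qed.

Lemma insE_delO v O : sortedb pltb O = true -> In v O -> insE v (delO v O) = O.
Proof.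
  intros H Hv. assert (H1 := strict_cnt1 v O H (proj2 (inb_true _ _) Hv)).
  apply pltb_sorted_pleb in H. apply sorted_unique; auto. apply insE_sorted, delO_sorted; auto.
  intros u. rewrite cnt_insE, cnt_delO. destruct (veqb u v) eqn:E1; auto.
  apply veqb_true in E1; subst. lia.
Qed.

Lemma delO_insE v O : sortedb pltb O = true -> ~ In v O -> delO v (insE v O) = O.
Proof.
  intros H Hv. apply pltb_sorted_pleb in H. apply sorted_unique; auto. apply delO_sorted, insE_sorted; auto.
  intros u. rewrite cnt_delO, cnt_insE. destruct (veqb u v) eqn:E1; auto.
  apply veqb_true in E1; subst. assert (cnt v O = 0%nat); [|lia].
  destruct (cnt v O) eqn:C; auto. exfalso; apply Hv, cnt_pos_In; lia.
Qed.

Lemma remE_insE_comm w w' E : sortedb pleb E = true -> In w E -> w <> w' ->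
  remE w (insE w' E) = insE w' (remE w E).
Proof.
  intros H Hw Hne. apply sorted_unique.
  apply remE_sorted, insE_sorted; auto. apply insE_sorted, remE_sorted; auto.
  intros u. rewrite cnt_remE; [|apply In_insE; auto]. rewrite !cnt_insE, cnt_remE; auto.
  destruct (veqb u w) eqn:E1, (veqb u w') eqn:E2; try lia.
  all: apply veqb_true in E1; subst; try (apply veqb_true in E2; subst; congruence).
  all: apply cnt_pos_In in Hw; lia.
Qed.

Lemma insE_delO_comm v v' O : sortedb pltb O = true -> v <> v' ->
  insE v (delO v' O) = delO v' (insE v O).
Proof.
  intros H Hne. apply pltb_sorted_pleb in H. apply sorted_unique.
  apply insE_sorted, delO_sorted; auto. apply delO_sorted, insE_sorted; auto.
  intros u. rewrite cnt_insE, !cnt_delO, cnt_insE.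
  destruct (veqb u v) eqn:E1, (veqb u v') eqn:E2; try lia.
  apply veqb_true in E1; apply veqb_true in E2; subst; congruence.
Qed.

Lemma cnt_insE_self w E : cnt w (insE w E) = S (cnt w E).
Proof. rewrite cnt_insE, veqb_refl; lia. Qed.

Lemma R1 v w v' w' x m p : wf m -> v <> v' ->
  opA v w (opA v' w' x) m p + opA v' w' (opA v w x) m p = 0.
Proof.
  intros [HE HO] Hne. destruct m as [E O]; unfold opA; simpl in *.
  rewrite (inb_delO v' v) by auto. rewrite (inb_delO v v') by auto.
  destruct (inb v O) eqn:Hv; destruct (inb v' O) eqn:Hv'; try ring.
  rewrite (insE_comm w' w) by auto. rewrite (delO_comm v' v) by auto.
  set (X := x (insE w (insE w' E), delO v (delO v' O)) p).
  rewrite !cnt_insE.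
  assert (C : forall a b : nat, INR (a + b + 1) = INR a + INR b + 1).
  { intros; rewrite !plus_INR; simpl; ring. }
  rewrite !C.
  assert (Cw : (if veqb w' w then 1 else 0)%nat = (if veqb w w' then 1 else 0)%nat) by (rewrite veqb_sym; auto).
  rewrite Cw.
  assert (Hww : veqb w w' = true -> cnt w E = cnt w' E).
  { intros Q; apply veqb_true in Q; subst; auto. }
  destruct (pltb_total v v' Hne) as [L|L].
  -
    assert (Hs1 : ltc v' O = S (ltc v' (delO v O))).
    { rewrite (ltc_delO v' v O), L, (strict_cnt1 v O); auto. lia. }
    assert (Hs2 : ltc v (delO v' O) = ltc v O).
    { rewrite (ltc_delO v v' O), (pltb_asym _ _ L). lia. }
    rewrite Hs1, Hs2, sg_S.
    destruct (veqb w w') eqn:Q; [rewrite (Hww eq_refl)|]; rewrite ?plus_INR; simpl; ring.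
  - assert (Hs1 : ltc v O = S (ltc v (delO v' O))).
    { rewrite (ltc_delO v v' O), L, (strict_cnt1 v' O); auto. lia. }
    assert (Hs2 : ltc v' (delO v O) = ltc v' O).
    { rewrite (ltc_delO v' v O), (pltb_asym _ _ L). lia. }
    rewrite Hs1, Hs2, sg_S.
    destruct (veqb w w') eqn:Q; [rewrite (Hww eq_refl)|]; rewrite ?plus_INR; simpl; ring.
Qed.

Lemma R1' v w w' x m p : opA v w (opA v w' x) m p = 0.
Proof.
  destruct m as [E O]; unfold opA; simpl. rewrite inb_delO_self. destruct (inb v O); ring.
Qed.

Lemma R2 v w v' w' x m p : wf m -> v <> v' -> w <> w' ->
  opA v' w' (opB w v x) m p + opB w v (opA v' w' x) m p = 0.
Proof.
  intros [HE HO] Hne Hne'. destruct m as [E O]; unfold opA, opB; simpl in *.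
  rewrite (inb_insE w w') by auto. rewrite (inb_delO v v') by auto.
  rewrite (inb_insE v' v) by auto.
  destruct (inb v' O) eqn:Hv'; destruct (inb w E) eqn:Hw; destruct (inb v O) eqn:Hv; simpl; try ring.
  apply inb_true in Hw. apply inb_false in Hv.
  rewrite (remE_insE_comm w w' E) by auto. rewrite (insE_delO_comm v v' O) by auto.
  rewrite (INR_cnt_remE w' w E) by (auto; apply veqb_false; auto).
  set (X := x (insE w' (remE w E), delO v' (insE v O)) p).
  destruct (pltb_total v v' Hne) as [L|L].
  - assert (Hs1 : ltc v (delO v' O) = ltc v O).
    { rewrite (ltc_delO v v' O), (pltb_asym _ _ L). lia. }
    assert (Hs2 : ltc v' (insE v O) = S (ltc v' O)).
    { rewrite ltc_insE, L. lia. }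
    rewrite Hs1, Hs2, sg_S. ring.
  - assert (Hs1 : ltc v O = S (ltc v (delO v' O))).
    { rewrite (ltc_delO v v' O), L, (strict_cnt1 v' O); auto. lia. }
    assert (Hs2 : ltc v' (insE v O) = ltc v' O).
    { rewrite ltc_insE, (pltb_asym _ _ L). lia. }
    rewrite Hs1, Hs2, sg_S. ring.
Qed.

Lemma R3 v w x m p : wf m ->
  opA v w (opB w v x) m p + opB w v (opA v w x) m p =
  (INR (cnt w (fst m)) + (if inb v (snd m) then 1 else 0)) * x m p.
Proof.
  intros [HE HO]. destruct m as [E O]; unfold opA, opB; simpl in *.
  rewrite inb_insE_self, inb_delO_self, inb_insE_self. simpl.
  rewrite ltc_delO_self, ltc_insE_self.
  destruct (inb v O) eqn:Hv; simpl.
  - rewrite remE_insE by auto. rewrite insE_delO by (auto; apply inb_true; auto).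
    rewrite plus_INR. simpl. rewrite andb_false_r.
    transitivity ((sg (ltc v O) * sg (ltc v O)) * (INR (cnt w E)+1) * x (E,O) p); [ring|].
    rewrite sg_sq; ring.
  - destruct (inb w E) eqn:Hw; simpl.
    + apply inb_true in Hw. apply inb_false in Hv.
      rewrite insE_remE, delO_insE by auto.
      rewrite cnt_remE, veqb_refl by auto.
      assert (0 < cnt w E)%nat by (apply cnt_pos_In; auto).
      replace (cnt w E - 1 + 1)%nat with (cnt w E) by lia.
      replace (sg (ltc v O) * (sg (ltc v O) * INR (cnt w E) * x (E, O) p))
        with ((sg (ltc v O) * sg (ltc v O)) * INR (cnt w E) * x (E, O) p) by ring.
      rewrite sg_sq. ring.
    + assert (cnt w E = 0%nat).
      { unfold inb in Hw. apply Nat.ltb_ge in Hw. lia. }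
      rewrite H. simpl. ring.
Qed.


Lemma sumR_ext k F G : (forall j, (j < k)%nat -> F j = G j) -> sumR k F = sumR k G.
Proof. induction k; simpl; intros H; auto. rewrite IHk, H; auto. Qed.

Lemma sumR_plus k F G : sumR k (fun j => F j + G j) = sumR k F + sumR k G.
Proof. induction k; simpl; [ring|]. rewrite IHk; ring. Qed.

Lemma sumR_scal k c F : c * sumR k F = sumR k (fun j => c * F j).
Proof. induction k; simpl; [ring|]. rewrite <- IHk; ring. Qed.

Lemma sumR_zero k F : (forall j, (j < k)%nat -> F j = 0) -> sumR k F = 0.
Proof. induction k; simpl; intros H; auto. rewrite IHk, H; auto. ring. Qed.

Lemma sumR_swap k l G : sumR k (fun s => sumR l (fun t => G s t)) = sumR l (fun t => sumR k (fun s => G s t)).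
Proof.
  induction k; simpl. symmetry; apply sumR_zero; auto.
  rewrite IHk. rewrite <- sumR_plus. auto.
Qed.

Lemma sumR_delta k t g : sumR k (fun s => if Nat.eqb s t then g s else 0) = if Nat.ltb t k then g t else 0.
Proof.
  induction k; simpl. auto. rewrite IHk.
  destruct (Nat.eqb k t) eqn:E1; [apply Nat.eqb_eq in E1; subst|apply Nat.eqb_neq in E1].
  - destruct (Nat.ltb t t) eqn:E2; [apply Nat.ltb_lt in E2; lia|].
    destruct (Nat.ltb t (S t)) eqn:E3; [ring|apply Nat.ltb_ge in E3; lia].
  - destruct (Nat.ltb t k) eqn:E2; destruct (Nat.ltb t (S k)) eqn:E3;
      rewrite ?Nat.ltb_lt, ?Nat.ltb_ge in *; try lia; ring.
Qed.

Lemma sumR_shift k F : sumR (S k) F = F 0%nat + sumR k (fun j => F (S j)).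
Proof. induction k; simpl in *. ring. rewrite IHk. ring. Qed.

Lemma sumR_trunc K M F : (forall s, (M <= s)%nat -> F s = 0) -> (M <= K)%nat -> sumR K F = sumR M F.
Proof.
  intros H HK. induction K. assert (M = 0%nat) by lia; subst; auto.
  destruct (Nat.eq_dec M (S K)); [subst; auto|]. simpl. rewrite IHK by lia. rewrite H by lia. ring.
Qed.

Lemma sumR_diag k G : (forall s t, s <> t -> G s t = 0) ->
  sumR k (fun s => sumR k (fun t => G s t)) = sumR k (fun s => G s s).
Proof.
  intros H. apply sumR_ext. intros s Hs.
  transitivity (sumR k (fun t => if Nat.eqb t s then G s t else 0)).
  - apply sumR_ext. intros t _. destruct (Nat.eqb t s) eqn:E; auto. apply H. apply Nat.eqb_neq in E; auto.
  - rewrite sumR_delta. apply Nat.ltb_lt in Hs. rewrite Hs. auto.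
Qed.

Lemma sumR_antisym k G : (forall s t, G s t + G t s = 0) ->
  sumR k (fun s => sumR k (fun t => G s t)) = 0.
Proof.
  intros H. set (S := sumR k (fun s => sumR k (fun t => G s t))).
  assert (S + S = 0).
  { unfold S at 2. rewrite sumR_swap. unfold S. rewrite <- sumR_plus.
    apply sumR_zero. intros. rewrite <- sumR_plus. apply sumR_zero. intros. apply H. }
  lra.
Qed.

Definition maxl (l : list var) : nat := fold_right (fun v a => Nat.max (snd v) a) 0%nat l.
Definition maxs (m : Mon) : nat := Nat.max (maxl (fst m)) (maxl (snd m)).
Definition bndM (K : nat) (m : Mon) : Prop :=
  forall v, In v (fst m) \/ In v (snd m) -> (snd v <= K)%nat.

Lemma maxl_le l K : (maxl l <= K)%nat <-> forall v, In v l -> (snd v <= K)%nat.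
Proof.
  induction l as [|a l IH]; simpl. split; intros; [tauto|lia].
  split.
  - intros H v [->|Hv]; [lia|]. apply IH; auto; lia.
  - intros H. apply Nat.max_lub; auto. apply IH; auto.
Qed.

Lemma maxs_le m K : (maxs m <= K)%nat <-> bndM K m.
Proof.
  unfold maxs, bndM. split.
  - intros H v [Hv|Hv]; [apply (maxl_le (fst m)) | apply (maxl_le (snd m))]; auto; lia.
  - intros H. apply Nat.max_lub; apply maxl_le; auto.
Qed.

Lemma bounded_maxs m : bndM (maxs m) m.
Proof. apply maxs_le; auto. Qed.

Lemma bounded_mono K K' m : bndM K m -> (K <= K')%nat -> bndM K' m.
Proof. intros H HK v Hv; specialize (H v Hv); lia. Qed.

Definition vv (i s : nat) : var := (i, S (S s)).
Definition ww (i s : nat) : var := (i, S s).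

Definition dsum (i K : nat) (x : elA) : elA := fun m p => sumR K (fun s => opA (vv i s) (ww i s) x m p).
Definition hsum (i K : nat) (x : elA) : elA := fun m p => sumR K (fun s => opB (ww i s) (vv i s) x m p).

Definition Nw (i : nat) (m : Mon) : nat :=
  (cntP (fun v => Nat.eqb (fst v) i) (fst m) + cntP (fun v => Nat.eqb (fst v) i && Nat.leb 2 (snd v)) (snd m))%nat.

Definition hop (i : nat) (x : elA) : elA := fun m p => / INR (Nw i m) * hsum i (maxs m) x m p.

Lemma opA_congr v w y y' m p :
  (inb v (snd m) = true -> y (insE w (fst m), delO v (snd m)) p = y' (insE w (fst m), delO v (snd m)) p) ->
  opA v w y m p = opA v w y' m p.
Proof. unfold opA. destruct (inb v (snd m)); auto. intros H; rewrite H; auto. Qed.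

Lemma opB_congr w v y y' m p :
  (inb w (fst m) = true -> inb v (snd m) = false ->
    y (remE w (fst m), insE v (snd m)) p = y' (remE w (fst m), insE v (snd m)) p) ->
  opB w v y m p = opB w v y' m p.
Proof.
  unfold opB. destruct (inb w (fst m)), (inb v (snd m)); simpl; auto. intros H; rewrite H; auto.
Qed.

Lemma opA_sum v w K F m p :
  opA v w (fun m0 p0 => sumR K (fun t => F t m0 p0)) m p = sumR K (fun t => opA v w (F t) m p).
Proof.
  unfold opA. destruct (inb v (snd m)). rewrite <- sumR_scal; auto. symmetry; apply sumR_zero; auto.
Qed.

Lemma opB_sum w v K F m p :
  opB w v (fun m0 p0 => sumR K (fun t => F t m0 p0)) m p = sumR K (fun t => opB w v (F t) m p).
Proof.
  unfold opB. destruct (inb w (fst m) && negb (inb v (snd m))). rewrite <- sumR_scal; auto.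
  symmetry; apply sumR_zero; auto.
Qed.

Lemma opA_scal v w c y m p : opA v w (fun m0 p0 => c * y m0 p0) m p = c * opA v w y m p.
Proof. unfold opA. destruct (inb v (snd m)); ring. Qed.
Lemma opB_scal w v c y m p : opB w v (fun m0 p0 => c * y m0 p0) m p = c * opB w v y m p.
Proof. unfold opB. destruct (inb w (fst m) && negb (inb v (snd m))); ring. Qed.

Lemma wf_A v w m : wf m -> wf (insE w (fst m), delO v (snd m)).
Proof. intros [H1 H2]; split; simpl. apply insE_sorted; auto. apply delO_strict; auto. Qed.
Lemma wf_B w v m : wf m -> inb v (snd m) = false -> wf (remE w (fst m), insE v (snd m)).
Proof. intros [H1 H2] H; split; simpl. apply remE_sorted; auto. apply insE_strict; auto. apply inb_false; auto. Qed.

Lemma bounded_A v w m K : bndM K m -> inb v (snd m) = true -> (snd w <= snd v)%nat ->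
  bndM K (insE w (fst m), delO v (snd m)).
Proof.
  intros H Hv Hw u [Hu|Hu]; simpl in Hu.
  - apply In_insE in Hu. destruct Hu as [->|Hu]; [|apply H; auto].
    apply inb_true in Hv. specialize (H v (or_intror Hv)). lia.
  - apply In_delO in Hu. apply H; tauto.
Qed.

Lemma bounded_B w v m K : bndM K m -> inb w (fst m) = true -> (snd v <= S (snd w))%nat ->
  bndM (S K) (insE w (fst m), delO v (snd m)) -> True.
Proof. auto. Qed.

Lemma bounded_B' w v m K : bndM K m -> inb w (fst m) = true -> (snd v <= S (snd w))%nat ->
  bndM (S K) (remE w (fst m), insE v (snd m)).
Proof.
  intros H Hw Hv u [Hu|Hu]; simpl in Hu.
  - apply In_remE in Hu. specialize (H u (or_introl Hu)); lia.
  - apply In_insE in Hu. destruct Hu as [->|Hu].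
    + apply inb_true in Hw. specialize (H w (or_introl Hw)). lia.
    + specialize (H u (or_intror Hu)); lia.
Qed.

Lemma opA_far v w x m p : ~ In v (snd m) -> opA v w x m p = 0.
Proof. intros H. unfold opA. apply inb_false in H. rewrite H; auto. Qed.
Lemma opB_far w v x m p : ~ In w (fst m) -> opB w v x m p = 0.
Proof. intros H. unfold opB. apply inb_false in H. rewrite H; auto. Qed.

Lemma dsum_stable i K K' x m p : bndM (S K) m -> (K <= K')%nat -> dsum i K' x m p = dsum i K x m p.
Proof.
  intros H HK. unfold dsum. apply sumR_trunc; auto. intros s Hs. apply opA_far.
  intros Hin. specialize (H _ (or_intror Hin)). unfold vv in H; simpl in H. lia.
Qed.

Lemma hsum_stable i K K' x m p : bndM K m -> (K <= K')%nat -> hsum i K' x m p = hsum i K x m p.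
Proof.
  intros H HK. unfold hsum. apply sumR_trunc; auto. intros s Hs. apply opB_far.
  intros Hin. specialize (H _ (or_introl Hin)). unfold ww in H; simpl in H. lia.
Qed.


Lemma delO_notin v l : ~ In v l -> delO v l = l.
Proof.
  induction l as [|a l IH]; simpl; auto. intros H. unfold delO; simpl.
  destruct (veqb v a) eqn:E. apply veqb_true in E; subst; tauto.
  simpl. f_equal. apply IH; tauto.
Qed.

Lemma nth_ltc O j d : sortedb pltb O = true -> (j < length O)%nat -> ltc (nth j O d) O = j.
Proof.
  revert j; induction O as [|a O IH]; intros j H Hj; simpl in Hj; [lia|].
  apply pltb_sorted_cons in H; destruct H as [H1 H2]. unfold ltc; cbn [cntP].
  destruct j as [|j].
  - simpl. rewrite pltb_irrefl. simpl. apply cntP_zero. rewrite Forall_forall in *.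
    intros x Hx. apply pltb_asym; auto.
  - simpl. assert (Hin : In (nth j O d) O) by (apply nth_In; lia).
    rewrite Forall_forall in H2. rewrite (H2 _ Hin). fold (ltc (nth j O d) O). rewrite IH; auto; lia.
Qed.

Lemma remove_nth_delO O j d : sortedb pltb O = true -> (j < length O)%nat -> remove_nth j O = delO (nth j O d) O.
Proof.
  revert j; induction O as [|a O IH]; intros j H Hj; simpl in Hj; [lia|].
  apply pltb_sorted_cons in H; destruct H as [H1 H2]. rewrite Forall_forall in H2.
  destruct j as [|j].
  - simpl. unfold delO; simpl. rewrite veqb_refl. simpl. fold (delO a O). rewrite delO_notin; auto.
    intros Hin; specialize (H2 a Hin); rewrite pltb_irrefl in H2; discriminate.
  - simpl. assert (Hin : In (nth j O d) O) by (apply nth_In; lia).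
    unfold delO; simpl. destruct (veqb (nth j O d) a) eqn:E.
    + apply veqb_true in E. rewrite <- E in H2. specialize (H2 _ Hin). rewrite pltb_irrefl in H2; discriminate.
    + simpl. f_equal. fold (delO (nth j O d) O). apply IH; auto; lia.
Qed.

Definition lsum (F : var -> R) (l : list var) : R := fold_right (fun v a => F v + a) 0 l.

Lemma sumR_nth_lsum F l d : sumR (length l) (fun j => F (nth j l d)) = lsum F l.
Proof.
  induction l as [|a l IH]; simpl; auto. rewrite <- IH.
  change (sumR (S (length l)) (fun j => F (nth j (a :: l) d)) = F a + sumR (length l) (fun j => F (nth j l d))).
  rewrite sumR_shift. auto.
Qed.

Lemma lsum_cons F a l : lsum F (a :: l) = F a + lsum F l.
Proof. reflexivity. Qed.

Lemma lsum_dsum i K H O : sortedb pltb O = true -> (forall v, In v O -> (snd v <= S K)%nat) ->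
  lsum (fun v => if Nat.eqb (fst v) i && Nat.leb 2 (snd v) then H v else 0) O =
  sumR K (fun s => if inb (vv i s) O then H (vv i s) else 0).
Proof.
  induction O as [|a O IH]; intros HS HB.
  - simpl. symmetry; apply sumR_zero; intros; unfold inb; simpl; auto.
  - apply pltb_sorted_cons in HS; destruct HS as [HS HF].
    assert (anot : ~ In a O).
    { intros Hin. rewrite Forall_forall in HF. specialize (HF a Hin). rewrite pltb_irrefl in HF; discriminate. }
    rewrite lsum_cons, IH; auto.
    2: intros v Hv; apply HB; simpl; auto.
    transitivity (sumR K (fun s => (if veqb (vv i s) a then H (vv i s) else 0) + (if inb (vv i s) O then H (vv i s) else 0))).
    + rewrite sumR_plus. f_equal.
      destruct (Nat.eqb (fst a) i && Nat.leb 2 (snd a)) eqn:Ea.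
      * apply andb_true_iff in Ea; destruct Ea as [Ea1 Ea2]. apply Nat.eqb_eq in Ea1; apply Nat.leb_le in Ea2.
        transitivity (sumR K (fun s => if Nat.eqb s (snd a - 2) then H (vv i s) else 0)).
        -- rewrite sumR_delta. assert (Hlt : (snd a - 2 < K)%nat) by (specialize (HB a (or_introl eq_refl)); lia).
           apply Nat.ltb_lt in Hlt. rewrite Hlt. f_equal. destruct a as [a1 a2]; unfold vv; simpl in *.
           f_equal; lia.
        -- apply sumR_ext. intros s _. destruct (Nat.eqb s (snd a - 2)) eqn:E1; destruct (veqb (vv i s) a) eqn:E2; auto.
           ++ apply veqb_false in E2. apply Nat.eqb_eq in E1. exfalso; apply E2. destruct a as [a1 a2]; unfold vv; simpl in *.
              f_equal; lia.
           ++ apply veqb_true in E2. apply Nat.eqb_neq in E1. exfalso; apply E1. rewrite <- E2; unfold vv; simpl; lia.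
      * symmetry; apply sumR_zero. intros s _. destruct (veqb (vv i s) a) eqn:E2; auto.
        apply veqb_true in E2. rewrite <- E2 in Ea. unfold vv in Ea; simpl in Ea. rewrite Nat.eqb_refl in Ea. discriminate.
    + apply sumR_ext. intros s _. unfold inb at 2. rewrite cnt_cntP. cbn [cntP]. rewrite <- cnt_cntP.
      destruct (veqb (vv i s) a) eqn:E2.
      * apply veqb_true in E2. rewrite E2. assert (inb a O = false) by (apply inb_false; auto). rewrite H0.
        simpl. ring.
      * simpl. unfold inb. ring.
Qed.

Lemma dop_dsum i K x m p : wf m -> bndM (S K) m -> dop i x m p = dsum i K x m p.
Proof.
  intros [HE HO] HB. destruct m as [E O]. unfold dop, dsum. cbn [fst snd] in *.
  set (H := fun v => sg (ltc v O) * INR (cnt (i, (snd v - 1)%nat) E + 1) * x (insE (i, (snd v - 1)%nat) E, delO v O) p).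
  transitivity (sumR (length O) (fun j => (fun v => if Nat.eqb (fst v) i && Nat.leb 2 (snd v) then H v else 0) (nth j O (0%nat,0%nat)))).
  - apply sumR_ext. intros j Hj. cbv beta. match goal with |- (if ?c then _ else _) = _ => destruct c end; auto.
    unfold H. rewrite nth_ltc, (remove_nth_delO O j (0%nat,0%nat)); auto.
  - transitivity (lsum (fun v => if Nat.eqb (fst v) i && Nat.leb 2 (snd v) then H v else 0) O).
    { exact (sumR_nth_lsum (fun v => if Nat.eqb (fst v) i && Nat.leb 2 (snd v) then H v else 0) O (0%nat,0%nat)). }
    rewrite (lsum_dsum i K); auto.
Qed.


Lemma vv_inj i s j t : vv i s = vv j t -> i = j /\ s = t.
Proof. unfold vv; intros H; inversion H; auto. Qed.
Lemma ww_inj i s j t : ww i s = ww j t -> i = j /\ s = t.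
Proof. unfold ww; intros H; inversion H; auto. Qed.

Lemma wf_bnd_A i s m K : wf m -> bndM K m -> inb (vv i s) (snd m) = true ->
  wf (insE (ww i s) (fst m), delO (vv i s) (snd m)) /\ bndM K (insE (ww i s) (fst m), delO (vv i s) (snd m)).
Proof. intros H1 H2 H3. split. apply wf_A; auto. apply bounded_A; auto. unfold vv, ww; simpl; lia. Qed.

Lemma wf_bnd_B i s m K : wf m -> bndM K m -> inb (ww i s) (fst m) = true -> inb (vv i s) (snd m) = false ->
  wf (remE (ww i s) (fst m), insE (vv i s) (snd m)) /\ bndM (S K) (remE (ww i s) (fst m), insE (vv i s) (snd m)).
Proof. intros H1 H2 H3 H4. split. apply wf_B; auto. apply bounded_B'; auto. Qed.

Lemma dd_zero i x m p : wf m -> dop i (dop i x) m p = 0.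
Proof.
  intros Hw. set (K := maxs m).
  assert (HB : bndM (S K) m) by (apply (bounded_mono K); [apply bounded_maxs|lia]).
  rewrite (dop_dsum i K) by auto. unfold dsum.
  transitivity (sumR K (fun s => sumR K (fun t => opA (vv i s) (ww i s) (opA (vv i t) (ww i t) x) m p))).
  - apply sumR_ext. intros s _. rewrite <- opA_sum. apply opA_congr. intros Hin.
    destruct (wf_bnd_A i s m (S K) Hw HB Hin) as [W1 W2].
    rewrite (dop_dsum i K) by auto. reflexivity.
  - apply sumR_antisym. intros s t. destruct (Nat.eq_dec s t) as [->|Hne].
    + rewrite !R1'. ring.
    + apply R1; auto. intros E; apply vv_inj in E; lia.
Qed.

Lemma Nw_A i j s m : wf m -> inb (vv j s) (snd m) = true ->
  Nw i (insE (ww j s) (fst m), delO (vv j s) (snd m)) = Nw i m.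
Proof.
  intros [_ HO] Hin. unfold Nw; cbn [fst snd]. rewrite cntP_insE, cntP_delO.
  rewrite (cntP_split (fun v => Nat.eqb (fst v) i && Nat.leb 2 (snd v)) (vv j s) (snd m)).
  rewrite (strict_cnt1 _ _ HO Hin). unfold vv, ww; simpl. destruct (Nat.eqb j i); simpl; lia.
Qed.

Lemma Nw_B i j s m : inb (ww j s) (fst m) = true -> inb (vv j s) (snd m) = false ->
  Nw i (remE (ww j s) (fst m), insE (vv j s) (snd m)) = Nw i m.
Proof.
  intros Hin Hn. apply inb_true in Hin. unfold Nw; cbn [fst snd]. rewrite cntP_insE, cntP_remE by auto.
  assert (cntP (fun v => Nat.eqb (fst v) i) (fst m) >= (if Nat.eqb (fst (ww j s)) i then 1 else 0))%nat.
  { destruct (Nat.eqb (fst (ww j s)) i) eqn:E; [|lia].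
    assert (0 < cntP (fun v => Nat.eqb (fst v) i) (fst m))%nat; [apply cntP_pos; eauto|lia]. }
  unfold vv, ww in *; simpl in *. destruct (Nat.eqb j i); simpl in *; lia.
Qed.

Lemma dh_expand i j x m p : wf m ->
  dop j (hop i x) m p + hop i (dop j x) m p =
  / INR (Nw i m) * sumR (S (S (maxs m))) (fun s => sumR (S (S (maxs m))) (fun t =>
     opA (vv j s) (ww j s) (opB (ww i t) (vv i t) x) m p + opB (ww i t) (vv i t) (opA (vv j s) (ww j s) x) m p)).
Proof.
  intros Hw. set (K := S (S (maxs m))).
  assert (HB : bndM (S K) m) by (apply (bounded_mono (maxs m)); [apply bounded_maxs|unfold K; lia]).
  assert (HB0 : bndM (maxs m) m) by apply bounded_maxs.
  rewrite (dop_dsum j K) by auto. unfold dsum.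
  assert (E1 : forall s, opA (vv j s) (ww j s) (hop i x) m p =
     / INR (Nw i m) * sumR K (fun t => opA (vv j s) (ww j s) (opB (ww i t) (vv i t) x) m p)).
  { intros s. rewrite <- opA_sum, <- opA_scal. apply opA_congr. intros Hin.
    destruct (wf_bnd_A j s m (maxs m) Hw HB0 Hin) as [W1 W2].
    unfold hop. rewrite Nw_A by auto. f_equal. symmetry. apply hsum_stable.
    apply bounded_maxs. apply maxs_le. apply (bounded_mono (maxs m)); auto; unfold K; lia. }
  rewrite (sumR_ext _ _ _ (fun s _ => E1 s)). rewrite <- sumR_scal.
  unfold hop at 1. rewrite <- (hsum_stable i (maxs m) K) by (auto; unfold K; lia).
  unfold hsum.
  assert (E2 : forall t, opB (ww i t) (vv i t) (dop j x) m p =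
     sumR K (fun s => opB (ww i t) (vv i t) (opA (vv j s) (ww j s) x) m p)).
  { intros t. rewrite <- opB_sum. apply opB_congr. intros Hin Hn.
    destruct (wf_bnd_B i t m (maxs m) Hw HB0 Hin Hn) as [W1 W2].
    rewrite (dop_dsum j K); auto. apply (bounded_mono (S (maxs m))); auto; unfold K; lia. }
  rewrite (sumR_ext _ _ _ (fun t _ => E2 t)).
  rewrite (sumR_swap K K (fun t s => opB (ww i t) (vv i t) (opA (vv j s) (ww j s) x) m p)).
  rewrite <- Rmult_plus_distr_l. f_equal. rewrite <- sumR_plus. apply sumR_ext. intros s _.
  rewrite <- sumR_plus. auto.
Qed.

Lemma dh_anti i j x m p : wf m -> i <> j -> dop j (hop i x) m p + hop i (dop j x) m p = 0.
Proof.
  intros Hw Hne. rewrite dh_expand by auto. rewrite sumR_zero; [ring|]. intros s _.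
  apply sumR_zero. intros t _. apply R2; auto.
  - intros E; apply vv_inj in E; lia.
  - intros E; apply ww_inj in E; lia.
Qed.

Lemma sum_delta_E i K a : (1 <= snd a <= K)%nat ->
  sumR K (fun s => if veqb (ww i s) a then 1 else 0) = if Nat.eqb (fst a) i then 1 else 0.
Proof.
  intros Ha. destruct (Nat.eqb (fst a) i) eqn:Ea.
  - apply Nat.eqb_eq in Ea.
    transitivity (sumR K (fun s => if Nat.eqb s (snd a - 1) then 1 else 0)).
    + apply sumR_ext. intros s _. destruct (veqb (ww i s) a) eqn:E1, (Nat.eqb s (snd a - 1)) eqn:E2; auto.
      * apply veqb_true in E1. apply Nat.eqb_neq in E2. rewrite <- E1 in E2. unfold ww in E2; simpl in E2; lia.
      * apply veqb_false in E1. apply Nat.eqb_eq in E2. exfalso; apply E1. destruct a; unfold ww; simpl in *; f_equal; lia.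
    + rewrite sumR_delta. replace (Nat.ltb (snd a - 1) K) with true; auto. symmetry; apply Nat.ltb_lt; lia.
  - apply sumR_zero. intros s _. destruct (veqb (ww i s) a) eqn:E1; auto.
    apply veqb_true in E1. rewrite <- E1 in Ea. unfold ww in Ea; simpl in Ea. rewrite Nat.eqb_refl in Ea; discriminate.
Qed.

Lemma sum_cnt_E i K E : (forall v, In v E -> (1 <= snd v <= K)%nat) ->
  sumR K (fun s => INR (cnt (ww i s) E)) = INR (cntP (fun v => Nat.eqb (fst v) i) E).
Proof.
  induction E as [|a E IH]; intros H.
  - apply sumR_zero. intros; simpl; auto.
  - transitivity (sumR K (fun s => (if veqb (ww i s) a then 1 else 0) + INR (cnt (ww i s) E))).
    + apply sumR_ext. intros s _. rewrite !cnt_cntP. cbn [cntP]. rewrite plus_INR.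
      destruct (veqb (ww i s) a); simpl; ring.
    + rewrite sumR_plus, IH, sum_delta_E by (intros; apply H; simpl; auto).
      cbn [cntP]. rewrite plus_INR. destruct (Nat.eqb (fst a) i); simpl; ring.
Qed.

Lemma lsum_ind_cntP (P : var -> bool) (l : list var) : lsum (fun v => if P v then 1 else 0) l = INR (cntP P l).
Proof.
  induction l as [|a l IH]; [simpl; auto|]. rewrite lsum_cons, IH. cbn [cntP]. rewrite plus_INR. destruct (P a); simpl; ring.
Qed.

Lemma sum_inb_O i K O : sortedb pltb O = true -> (forall v, In v O -> (snd v <= S K)%nat) ->
  sumR K (fun s => if inb (vv i s) O then 1 else 0) = INR (cntP (fun v => Nat.eqb (fst v) i && Nat.leb 2 (snd v)) O).
Proof.
  intros H1 H2. rewrite <- lsum_ind_cntP. rewrite (lsum_dsum i K (fun _ => 1)); auto.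
Qed.

Lemma dh_id i x m p n : validM n m -> Nw i m <> 0%nat -> dop i (hop i x) m p + hop i (dop i x) m p = x m p.
Proof.
  intros Hv HN. assert (Hw : wf m) by (destruct Hv as [A [B _]]; split; auto).
  rewrite dh_expand by auto. set (K := S (S (maxs m))).
  rewrite sumR_diag.
  2: { intros s t Hst. apply R2; auto.
       - intros E; apply vv_inj in E; lia.
       - intros E; apply ww_inj in E; lia. }
  rewrite (sumR_ext _ _ (fun s => (INR (cnt (ww i s) (fst m)) + (if inb (vv i s) (snd m) then 1 else 0)) * x m p)).
  2: { intros s _. apply R3; auto. }
  transitivity (/ INR (Nw i m) * (sumR K (fun s => INR (cnt (ww i s) (fst m))) + sumR K (fun s => if inb (vv i s) (snd m) then 1 else 0)) * x m p).
  - rewrite <- sumR_plus. rewrite Rmult_assoc. f_equal. rewrite Rmult_comm, sumR_scal.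
    apply sumR_ext; intros; ring.
  - rewrite sum_cnt_E, sum_inb_O.
    + unfold Nw. rewrite <- plus_INR. fold (Nw i m). field. apply not_0_INR; auto.
    + destruct Hw; auto.
    + intros v Hin. pose proof (bounded_maxs m v (or_intror Hin)). unfold K; lia.
    + intros v Hin. destruct Hv as [_ [_ [HE _]]]. rewrite Forall_forall in HE. specialize (HE v Hin).
      pose proof (bounded_maxs m v (or_introl Hin)). unfold K; lia.
Qed.


Section Cont.
Variable n : nat.

Lemma cont_const c x : cont_at n (fun _ => c) x.
Proof. intros eps He. exists 1; split; [lra|]. intros. unfold Rminus; rewrite Rplus_opp_r, Rabs_R0; auto. Qed.

Lemma cont_add f g x : cont_at n f x -> cont_at n g x -> cont_at n (fun y => f y + g y) x.
Proof.
  intros Hf Hg eps He.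
  destruct (Hf (eps/2)) as [d1 [Hd1 H1]]; [lra|].
  destruct (Hg (eps/2)) as [d2 [Hd2 H2]]; [lra|].
  exists (Rmin d1 d2); split; [apply Rmin_pos; auto|].
  intros y Hy Hk.
  assert (A1 := H1 y Hy (fun k Hk' => Rlt_le_trans _ _ _ (Hk k Hk') (Rmin_l _ _))).
  assert (A2 := H2 y Hy (fun k Hk' => Rlt_le_trans _ _ _ (Hk k Hk') (Rmin_r _ _))).
  replace (f y + g y - (f x + g x)) with ((f y - f x) + (g y - g x)) by ring.
  eapply Rle_lt_trans; [apply Rabs_triang|]. lra.
Qed.

Lemma cont_mul f g x : cont_at n f x -> cont_at n g x -> cont_at n (fun y => f y * g y) x.
Proof.
  intros Hf Hg eps He.
  set (a := Rabs (f x)). set (b := Rabs (g x)).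
  assert (Ha : 0 <= a) by apply Rabs_pos. assert (Hb : 0 <= b) by apply Rabs_pos.
  destruct (Hf (Rmin 1 (eps / (2 * (b + 1))))) as [d1 [Hd1 H1]].
  { apply Rmin_pos; [lra|]. apply Rdiv_lt_0_compat; lra. }
  destruct (Hg (Rmin 1 (eps / (2 * (a + 1))))) as [d2 [Hd2 H2]].
  { apply Rmin_pos; [lra|]. apply Rdiv_lt_0_compat; lra. }
  exists (Rmin d1 d2); split; [apply Rmin_pos; auto|].
  intros y Hy Hk.
  assert (A1 := H1 y Hy (fun k Hk' => Rlt_le_trans _ _ _ (Hk k Hk') (Rmin_l _ _))).
  assert (A2 := H2 y Hy (fun k Hk' => Rlt_le_trans _ _ _ (Hk k Hk') (Rmin_r _ _))).
  assert (A1a : Rabs (f y - f x) < eps / (2 * (b + 1))) by (eapply Rlt_le_trans; [exact A1|apply Rmin_r]).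
  assert (A2a : Rabs (g y - g x) < eps / (2 * (a + 1))) by (eapply Rlt_le_trans; [exact A2|apply Rmin_r]).
  assert (A2b : Rabs (g y - g x) < 1) by (eapply Rlt_le_trans; [exact A2|apply Rmin_l]).
  assert (Gy : Rabs (g y) <= b + 1).
  { replace (g y) with ((g y - g x) + g x) by ring. eapply Rle_trans; [apply Rabs_triang|]. unfold b; lra. }
  replace (f y * g y - f x * g x) with ((f y - f x) * g y + f x * (g y - g x)) by ring.
  eapply Rle_lt_trans; [apply Rabs_triang|]. rewrite !Rabs_mult.
  assert (T1 : Rabs (f y - f x) * Rabs (g y) <= eps / (2 * (b + 1)) * (b + 1)).
  { apply Rmult_le_compat; try apply Rabs_pos; lra. }
  assert (T2 : Rabs (f x) * Rabs (g y - g x) <= a * (eps / (2 * (a + 1)))).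
  { apply Rmult_le_compat_l; [apply Rabs_pos|lra]. }
  assert (E1 : eps / (2 * (b + 1)) * (b + 1) = eps / 2) by (field; lra).
  assert (E2 : a * (eps / (2 * (a + 1))) < eps / 2).
  { apply (Rmult_lt_reg_r (2 * (a + 1))); [lra|].
    replace (a * (eps / (2 * (a + 1))) * (2 * (a + 1))) with (a * eps) by (field; lra). nra. }
  destruct (Req_dec (Rabs (f y - f x)) 0) as [Z|Z].
  - rewrite Z. lra.
  - assert (Rabs (f y - f x) * Rabs (g y) < eps / 2 \/ Rabs (f y - f x) * Rabs (g y) <= eps/2) by lra.
    lra.
Qed.

Lemma cont_inv g x : cont_at n g x -> g x <> 0 -> cont_at n (fun y => / g y) x.
Proof.
  intros Hg Hx eps He.
  set (b := Rabs (g x)). assert (Hb : 0 < b) by (apply Rabs_pos_lt; auto).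
  destruct (Hg (Rmin (b / 2) (eps * b * b / 2))) as [d [Hd H]].
  { apply Rmin_pos; [lra|]. apply Rdiv_lt_0_compat; [|lra]. apply Rmult_lt_0_compat; [|lra]. nra. }
  exists d; split; auto. intros y Hy Hk. specialize (H y Hy Hk).
  assert (A1 : Rabs (g y - g x) < b / 2) by (eapply Rlt_le_trans; [exact H|apply Rmin_l]).
  assert (A2 : Rabs (g y - g x) < eps * b * b / 2) by (eapply Rlt_le_trans; [exact H|apply Rmin_r]).
  assert (Gy : b / 2 < Rabs (g y)).
  { assert (Rabs (g x) <= Rabs (g x - g y) + Rabs (g y)).
    { replace (g x) with ((g x - g y) + g y) at 1 by ring. apply Rabs_triang. }
    rewrite Rabs_minus_sym in H0. fold b in H0. lra. }
  assert (gy0 : g y <> 0). { intros Z. rewrite Z, Rabs_R0 in Gy. lra. }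
  replace (/ g y - / g x) with ((g x - g y) / (g y * g x)) by (field; auto).
  unfold Rdiv. rewrite Rabs_mult, Rabs_inv, Rabs_mult. rewrite Rabs_minus_sym. fold b.
  apply (Rmult_lt_reg_r (Rabs (g y) * b)); [nra|].
  rewrite Rmult_assoc, Rinv_l by nra. rewrite Rmult_1_r.
  apply Rlt_le_trans with (eps * b * b / 2); auto.
  assert (0 < eps * b * (Rabs (g y) - b / 2)) by (apply Rmult_lt_0_compat; [apply Rmult_lt_0_compat|]; lra). lra.
Qed.

End Cont.

Lemma upd_same (x : point) k : upd x k (x k) = x.
Proof. apply functional_extensionality. intros j. unfold upd. destruct (Nat.eqb j k) eqn:E; auto.
  apply Nat.eqb_eq in E; subst; auto. Qed.

Inductive ex : Type :=
| eD : nat -> list nat -> ex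
| eI : nat -> ex
| eC : R -> ex
| eA : ex -> ex -> ex
| eM : ex -> ex -> ex.

Section Ex.
Variable n : nat.
Variable U : point -> Prop.
Variable Ds : nat -> list nat -> point -> R.
Variable nz : nat -> Prop.
Hypothesis Dcont : forall j ds x, U x -> cont_at n (Ds j ds) x.
Hypothesis Dder : forall j ds k x, (k < n)%nat -> U x ->
  derivable_pt_lim (fun t => Ds j ds (upd x k t)) (x k) (Ds j (k :: ds) x).
Hypothesis Dnz : forall j x, nz j -> U x -> Ds j [] x <> 0.

Fixpoint eval (e : ex) (x : point) : R :=
  match e with
  | eD j ds => Ds j ds x
  | eI j => / Ds j [] x
  | eC c => c
  | eA a b => eval a x + eval b x
  | eM a b => eval a x * eval b x
  end.

Fixpoint der (k : nat) (e : ex) : ex :=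
  match e with
  | eD j ds => eD j (k :: ds)
  | eI j => eM (eC (-1)) (eM (eM (eI j) (eI j)) (eD j [k]))
  | eC c => eC 0
  | eA a b => eA (der k a) (der k b)
  | eM a b => eA (eM (der k a) b) (eM a (der k b))
  end.

Fixpoint okE (e : ex) : Prop :=
  match e with
  | eI j => nz j
  | eA a b | eM a b => okE a /\ okE b
  | _ => True
  end.

Lemma der_ok k e : okE e -> okE (der k e).
Proof. induction e; simpl; tauto. Qed.

Lemma eval_cont e x : okE e -> U x -> cont_at n (eval e) x.
Proof.
  induction e; simpl; intros Ho Hx.
  - apply Dcont; auto.
  - apply cont_inv; auto.
  - apply cont_const.
  - apply cont_add; tauto.
  - apply cont_mul; tauto.
Qed.

Lemma eval_der e k x : okE e -> (k < n)%nat -> U x ->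
  derivable_pt_lim (fun t => eval e (upd x k t)) (x k) (eval (der k e) x).
Proof.
  induction e; simpl; intros Ho Hk Hx.
  - apply Dder; auto.
  - assert (H := Dder n0 [] k x Hk Hx).
    assert (Hnz : Ds n0 [] (upd x k (x k)) <> 0) by (rewrite upd_same; apply Dnz; auto).
    assert (H2 := derivable_pt_lim_div (fun _ => 1) (fun t => Ds n0 [] (upd x k t)) (x k) _ _
                   (derivable_pt_lim_const 1 (x k)) H Hnz).
    assert (Hf : (fun t => / Ds n0 [] (upd x k t)) = ((fun _ : R => 1) / (fun t => Ds n0 [] (upd x k t)))%F).
    { apply functional_extensionality; intros t; unfold div_fct, Rdiv; ring. }
    rewrite Hf. cbv beta in H2. rewrite upd_same in H2.
    replace (-1 * (/ Ds n0 [] x * / Ds n0 [] x * Ds n0 [k] x)) with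
      ((0 * Ds n0 [] x - Ds n0 [k] x * 1) / (Ds n0 [] x)²); [exact H2|]. unfold Rsqr. field. apply Dnz; auto.
  - apply derivable_pt_lim_const.
  - apply (derivable_pt_lim_plus (fun t => eval e1 (upd x k t)) (fun t => eval e2 (upd x k t))); tauto.
  - assert (H := derivable_pt_lim_mult (fun t => eval e1 (upd x k t)) (fun t => eval e2 (upd x k t)) (x k) _ _
      (IHe1 (proj1 Ho) Hk Hx) (IHe2 (proj2 Ho) Hk Hx)).
    unfold mult_fct in H. rewrite upd_same in H.
    replace (eval (der k e1) x * eval e2 x + eval e1 x * eval (der k e2) x) with
      (eval (der k e1) x * eval e2 x + eval e1 x * eval (der k e2) x); [|auto].
    exact H.
Qed.

Fixpoint ders (ds : list nat) (e : ex) : ex :=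
  match ds with [] => e | k :: ds' => der k (ders ds' e) end.

Lemma ders_ok ds e : okE e -> okE (ders ds e).
Proof. induction ds; simpl; auto. intros; apply der_ok; auto. Qed.

Lemma ex_smooth e g : okE e -> (forall x, U x -> eval e x = g x) -> smooth_on n U g.
Proof.
  intros Ho Hg. exists (fun ds => eval (ders ds e)). split; [|split].
  - simpl; auto.
  - intros ds x Hx. apply eval_cont; auto. apply ders_ok; auto.
  - intros ds k x Hk Hx. simpl. apply eval_der; auto. apply ders_ok; auto.
Qed.
End Ex.

Section Smooth.
Variable n : nat.
Variable U : point -> Prop.

Definition pack2 (D1 D2 : list nat -> point -> R) : nat -> list nat -> point -> R :=
  fun j => match j with O => D1 | _ => D2 end.

Lemma smooth_ext g h : (forall x, U x -> g x = h x) -> smooth_on n U g -> smooth_on n U h.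
Proof.
  intros H [D [H1 [H2 H3]]]. exists D; split; [|split]; auto. intros x Hx; rewrite H1, H; auto.
Qed.

Lemma smooth_binop (op : ex -> ex -> ex) g h F :
  (okE (fun _ => False) (op (eD 0 []) (eD 1 []))) ->
  (forall (Ds : nat -> list nat -> point -> R) x, eval Ds (op (eD 0 []) (eD 1 [])) x = F (Ds 0%nat [] x) (Ds 1%nat [] x)) ->
  smooth_on n U g -> smooth_on n U h -> smooth_on n U (fun x => F (g x) (h x)).
Proof.
  intros Hok Hev [D1 [A1 [B1 C1]]] [D2 [A2 [B2 C2]]].
  apply (ex_smooth n U (pack2 D1 D2) (fun _ => False)) with (e := op (eD 0 []) (eD 1 [])).
  - intros [|j] ds x Hx; simpl; auto.
  - intros [|j] ds k x Hk Hx; simpl; auto.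
  - intros j x [].
  - apply Hok.
  - intros x Hx. rewrite Hev. simpl. rewrite A1, A2; auto.
Qed.

Lemma smooth_add g h : smooth_on n U g -> smooth_on n U h -> smooth_on n U (fun x => g x + h x).
Proof.
  apply (smooth_binop eA g h (fun a b => a + b)); simpl; auto.
Qed.

Lemma smooth_mul g h : smooth_on n U g -> smooth_on n U h -> smooth_on n U (fun x => g x * h x).
Proof.
  apply (smooth_binop eM g h (fun a b => a * b)); simpl; auto.
Qed.

Lemma smooth_const c : smooth_on n U (fun _ => c).
Proof.
  apply (ex_smooth n U (fun _ _ _ => 0) (fun _ => False)) with (e := eC c); simpl; auto.
  - intros. apply cont_const.
  - intros. apply derivable_pt_lim_const.
Qed.

Lemma smooth_inv g : smooth_on n U g -> (forall x, U x -> g x <> 0) -> smooth_on n U (fun x => / g x).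
Proof.
  intros [D [A [B C]]] Hnz.
  apply (ex_smooth n U (fun _ => D) (fun j => True)) with (e := eI 0); simpl; auto.
  - intros j x _ Hx. rewrite A; auto.
  - intros x Hx. rewrite A; auto.
Qed.

Lemma smooth_coord i : (i < n)%nat -> (forall x, U x -> inRn n x) -> smooth_on n U (fun x => x i).
Proof.
  intros Hi HU.
  exists (fun ds => match ds with [] => fun x => x i | [k] => fun _ => if Nat.eqb k i then 1 else 0 | _ => fun _ => 0 end).
  split; [|split].
  - auto.
  - intros [|k [|k' ds]] x Hx; try apply cont_const.
    all: try (intros eps He; exists eps; split; auto; intros y Hy Hk; apply Hk; auto).
  - intros [|k [|k' ds]] k0 x Hk Hx; try apply derivable_pt_lim_const.
    unfold upd. destruct (Nat.eqb i k0) eqn:E.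
    + apply Nat.eqb_eq in E; subst. rewrite Nat.eqb_refl. apply derivable_pt_lim_id.
    + rewrite Nat.eqb_sym, E. apply derivable_pt_lim_const.
Qed.

Lemma smooth_sumR k (F : nat -> point -> R) : (forall j, (j < k)%nat -> smooth_on n U (F j)) ->
  smooth_on n U (fun x => sumR k (fun j => F j x)).
Proof.
  induction k; intros H; simpl.
  - apply smooth_const.
  - apply (smooth_add (fun x => sumR k (fun j => F j x)) (F k)); auto.
Qed.

Lemma smooth_scal c g : smooth_on n U g -> smooth_on n U (fun x => c * g x).
Proof. intros H. apply (smooth_mul (fun _ => c) g); auto. apply smooth_const. Qed.

Lemma smooth_pow g k : smooth_on n U g -> smooth_on n U (fun x => g x ^ k).
Proof.
  intros H. induction k; simpl. apply smooth_const. apply (smooth_mul g (fun x => g x ^ k)); auto.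
Qed.
End Smooth.


Section V.
Variable n : nat.

Lemma valid_wf m : validM n m -> wf m.
Proof. intros [A [B _]]; split; auto. Qed.

Lemma valid_A j s m : validM n m -> inb (vv j s) (snd m) = true ->
  validM n (insE (ww j s) (fst m), delO (vv j s) (snd m)).
Proof.
  intros [A [B [C D]]] H. apply inb_true in H.
  rewrite Forall_forall in D. assert (Hj := D _ H); unfold vv in Hj; simpl in Hj.
  split; [|split; [|split]]; simpl.
  - apply insE_sorted; auto.
  - apply delO_strict; auto.
  - apply Forall_forall. intros x Hx. apply In_insE in Hx. destruct Hx as [->|Hx].
    + unfold ww; simpl; lia.
    + rewrite Forall_forall in C; auto.
  - apply Forall_forall. intros x Hx. apply In_delO in Hx. apply D; tauto.
Qed.

Lemma valid_B j s m : validM n m -> inb (ww j s) (fst m) = true -> inb (vv j s) (snd m) = false ->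
  validM n (remE (ww j s) (fst m), insE (vv j s) (snd m)).
Proof.
  intros [A [B [C D]]] H H'. apply inb_true in H. apply inb_false in H'.
  rewrite Forall_forall in C. assert (Hj := C _ H); unfold ww in Hj; simpl in Hj.
  split; [|split; [|split]]; simpl.
  - apply remE_sorted; auto.
  - apply insE_strict; auto.
  - apply Forall_forall. intros x Hx. apply In_remE in Hx. auto.
  - apply Forall_forall. intros x Hx. apply In_insE in Hx. destruct Hx as [->|Hx].
    + unfold vv; simpl; lia.
    + rewrite Forall_forall in D; auto.
Qed.

Lemma dop_ds i x m p : validM n m -> dop i x m p = dsum i (maxs m) x m p.
Proof.
  intros H. apply dop_dsum. apply valid_wf; auto. apply (bounded_mono (maxs m)); [apply bounded_maxs|lia].
Qed.

Lemma dop_congr i x x' m p : validM n m -> (forall m', validM n m' -> x m' p = x' m' p) ->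
  dop i x m p = dop i x' m p.
Proof.
  intros Hv H. rewrite !dop_ds by auto. unfold dsum. apply sumR_ext. intros s _.
  apply opA_congr. intros Hin. apply H. apply valid_A; auto.
Qed.

Lemma hop_congr i x x' m p : validM n m -> (forall m', validM n m' -> x m' p = x' m' p) ->
  hop i x m p = hop i x' m p.
Proof.
  intros Hv H. unfold hop, hsum. f_equal. apply sumR_ext. intros s _.
  apply opB_congr. intros Hin Hn. apply H. apply valid_B; auto.
Qed.

Lemma Nw_A' i j s m : validM n m -> inb (vv j s) (snd m) = true ->
  Nw i (insE (ww j s) (fst m), delO (vv j s) (snd m)) = Nw i m.
Proof. intros H1 H2. apply Nw_A; auto. apply valid_wf; auto. Qed.

Lemma dop_local i x m p : validM n m ->
  (forall m', validM n m' -> (forall j, Nw j m' = Nw j m) -> x m' p = 0) -> dop i x m p = 0.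
Proof.
  intros Hv H. rewrite dop_ds by auto. unfold dsum. apply sumR_zero. intros s _.
  unfold opA. destruct (inb (vv i s) (snd m)) eqn:E; [|auto].
  rewrite H; [ring|apply valid_A; auto|]. intros j; apply Nw_A'; auto.
Qed.

Lemma hop_local i x m p : validM n m ->
  (forall m', validM n m' -> (forall j, Nw j m' = Nw j m) -> x m' p = 0) -> hop i x m p = 0.
Proof.
  intros Hv H. unfold hop, hsum. rewrite sumR_zero; [ring|]. intros s _.
  unfold opB. destruct (inb (ww i s) (fst m)) eqn:E1, (inb (vv i s) (snd m)) eqn:E2; simpl; auto.
  rewrite H; [ring|apply valid_B; auto|]. intros j; apply Nw_B; auto.
Qed.

Lemma Nw_pos_E j a m : In a (fst m) -> fst a = j -> (0 < Nw j m)%nat.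
Proof.
  intros H1 H2. unfold Nw.
  assert (0 < cntP (fun v => Nat.eqb (fst v) j) (fst m))%nat.
  2:{ eapply Nat.lt_le_trans; [eassumption|apply Nat.le_add_r]. }
  apply cntP_pos. exists a; split; auto. apply Nat.eqb_eq; auto.
Qed.

Lemma Nw_pos_O j a m : In a (snd m) -> fst a = j -> (2 <= snd a)%nat -> (0 < Nw j m)%nat.
Proof.
  intros H1 H2 H3. unfold Nw.
  assert (0 < cntP (fun v => Nat.eqb (fst v) j && Nat.leb 2 (snd v)) (snd m))%nat.
  2:{ eapply Nat.lt_le_trans; [eassumption|apply Nat.le_add_l]. }
  apply cntP_pos. exists a; split; auto. apply andb_true_iff; split; [apply Nat.eqb_eq|apply Nat.leb_le]; auto.
Qed.

Lemma dop_Nw0 j x m p : validM n m -> Nw j m = 0%nat -> dop j x m p = 0.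
Proof.
  intros Hv H. rewrite dop_ds by auto. unfold dsum. apply sumR_zero. intros s _.
  unfold opA. destruct (inb (vv j s) (snd m)) eqn:E; [|auto].
  apply inb_true in E. pose proof (Nw_pos_O j _ m E eq_refl). unfold vv in H0; simpl in H0. lia.
Qed.

Lemma hop_Nw0 i x m p : Nw i m = 0%nat -> hop i x m p = 0.
Proof.
  intros H. unfold hop, hsum. rewrite sumR_zero; [ring|]. intros s _.
  unfold opB. destruct (inb (ww i s) (fst m)) eqn:E; simpl; [|auto].
  apply inb_true in E. pose proof (Nw_pos_E i _ m E eq_refl). lia.
Qed.

Lemma dop_LA j x m p : validM n m ->
  (forall m', validM n m' -> Nw j m' <> 0%nat -> x m' p = 0) -> dop j x m p = 0.
Proof.
  intros Hv H. rewrite dop_ds by auto. unfold dsum. apply sumR_zero. intros s _.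
  unfold opA. destruct (inb (vv j s) (snd m)) eqn:E; [|auto].
  rewrite H; [ring|apply valid_A; auto|].
  assert (0 < Nw j (insE (ww j s) (fst m), delO (vv j s) (snd m)))%nat; [|lia].
  apply (Nw_pos_E j (ww j s)); auto. simpl. apply In_insE; auto.
Qed.

Lemma dop_plus i x x' m p : dop i (fun m0 p0 => x m0 p0 + x' m0 p0) m p = dop i x m p + dop i x' m p.
Proof.
  unfold dop. rewrite <- sumR_plus. apply sumR_ext. intros j _.
  match goal with |- (if ?c then _ else _) = _ => destruct c end; ring.
Qed.

Lemma dop_scal i (g : point -> R) x m p : dop i (fun m0 p0 => g p0 * x m0 p0) m p = g p * dop i x m p.
Proof.
  unfold dop. rewrite sumR_scal. apply sumR_ext. intros j _.
  match goal with |- (if ?c then _ else _) = _ => destruct c end; ring.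
Qed.

Lemma dop_zero i m p : dop i (fun _ _ => 0) m p = 0.
Proof.
  unfold dop. apply sumR_zero. intros j _.
  match goal with |- (if ?c then _ else _) = _ => destruct c end; ring.
Qed.

Lemma dop_sum i K (F : nat -> elA) m p :
  dop i (fun m0 p0 => sumR K (fun j => F j m0 p0)) m p = sumR K (fun j => dop i (F j) m p).
Proof.
  induction K; simpl. apply dop_zero.
  rewrite (dop_plus i (fun m0 p0 => sumR K (fun j => F j m0 p0)) (F K)). rewrite IHK; auto.
Qed.

Lemma hop_plus i x x' m p : hop i (fun m0 p0 => x m0 p0 + x' m0 p0) m p = hop i x m p + hop i x' m p.
Proof.
  unfold hop, hsum. rewrite <- Rmult_plus_distr_l, <- sumR_plus. f_equal. apply sumR_ext. intros j _.
  unfold opB. match goal with |- (if ?c then _ else _) = _ => destruct c end; ring.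
Qed.

Lemma hop_scal i (g : point -> R) x m p : hop i (fun m0 p0 => g p0 * x m0 p0) m p = g p * hop i x m p.
Proof.
  unfold hop, hsum.
  transitivity (/ INR (Nw i m) * sumR (maxs m) (fun j => g p * opB (ww i j) (vv i j) x m p)).
  2: { rewrite <- sumR_scal; ring. }
  f_equal. apply sumR_ext. intros j _.
  unfold opB. match goal with |- (if ?c then _ else _) = _ => destruct c end; ring.
Qed.

Lemma hop_zero i m p : hop i (fun _ _ => 0) m p = 0.
Proof.
  unfold hop, hsum. rewrite sumR_zero; [ring|]. intros j _.
  unfold opB. match goal with |- (if ?c then _ else _) = _ => destruct c end; ring.
Qed.

Lemma hop_sum i K (F : nat -> elA) m p :
  hop i (fun m0 p0 => sumR K (fun j => F j m0 p0)) m p = sumR K (fun j => hop i (F j) m p).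
Proof.
  induction K; simpl. apply hop_zero.
  rewrite (hop_plus i (fun m0 p0 => sumR K (fun j => F j m0 p0)) (F K)). rewrite IHK; auto.
Qed.

Definition act (m : Mon) : list nat := filter (fun j => Nat.ltb 0 (Nw j m)) (seq 0 n).

Definition proj (P : list nat -> bool) (x : elA) : elA := fun m p => if P (act m) then x m p else 0.

Lemma act_eq m m' : (forall j, Nw j m' = Nw j m) -> act m' = act m.
Proof. intros H. unfold act. apply filter_ext. intros j. rewrite H; auto. Qed.

Lemma opA_proj i s P x m p : validM n m ->
  opA (vv i s) (ww i s) (proj P x) m p = if P (act m) then opA (vv i s) (ww i s) x m p else 0.
Proof.
  intros Hv. unfold opA at 1. destruct (inb (vv i s) (snd m)) eqn:E.
  - unfold proj. rewrite (act_eq m) by (intros; apply Nw_A'; auto).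
    destruct (P (act m)); [unfold opA; rewrite E|]; ring.
  - destruct (P (act m)); auto. unfold opA; rewrite E; auto.
Qed.

Lemma opB_proj i s P x m p : validM n m ->
  opB (ww i s) (vv i s) (proj P x) m p = if P (act m) then opB (ww i s) (vv i s) x m p else 0.
Proof.
  intros Hv. unfold opB at 1. destruct (inb (ww i s) (fst m)) eqn:E1, (inb (vv i s) (snd m)) eqn:E2; simpl.
  - destruct (P (act m)); auto. unfold opB; rewrite E1, E2; auto.
  - unfold proj. rewrite (act_eq m) by (intros; apply Nw_B; auto).
    destruct (P (act m)); [unfold opB; rewrite E1, E2; simpl|]; ring.
  - destruct (P (act m)); auto. unfold opB; rewrite E1; auto.
  - destruct (P (act m)); auto. unfold opB; rewrite E1; auto.
Qed.

Lemma dop_proj i P x m p : validM n m -> dop i (proj P x) m p = proj P (dop i x) m p.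
Proof.
  intros Hv. unfold proj at 2. rewrite !dop_ds by auto. unfold dsum.
  rewrite (sumR_ext _ _ _ (fun s _ => opA_proj i s P x m p Hv)).
  destruct (P (act m)); auto. apply sumR_zero; auto.
Qed.

Lemma hop_proj i P x m p : validM n m -> hop i (proj P x) m p = proj P (hop i x) m p.
Proof.
  intros Hv. unfold proj at 2. unfold hop, hsum.
  rewrite (sumR_ext _ _ _ (fun s _ => opB_proj i s P x m p Hv)).
  destruct (P (act m)); auto. rewrite sumR_zero; auto. ring.
Qed.

Lemma In_act j m : In j (act m) <-> (j < n)%nat /\ Nw j m <> 0%nat.
Proof.
  unfold act. rewrite filter_In, in_seq, Nat.ltb_lt. lia.
Qed.

Lemma act_nodup m : NoDup (act m).
Proof. unfold act. apply NoDup_filter, seq_NoDup. Qed.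

Lemma act_nil m : act m = [] <-> forall j, (j < n)%nat -> Nw j m = 0%nat.
Proof.
  split.
  - intros H j Hj. destruct (Nat.eq_dec (Nw j m) 0); auto. exfalso.
    assert (In j (act m)) by (apply In_act; auto). rewrite H in H0; auto.
  - intros H. destruct (act m) as [|a l] eqn:E; auto. exfalso.
    assert (Ha : In a (act m)) by (rewrite E; simpl; auto). apply In_act in Ha. destruct Ha as [H1 H2].
    apply H2, H; auto.
Qed.

Lemma Nw_zero_iff j m : Nw j m = 0%nat <->
  (forall a, In a (fst m) -> fst a <> j) /\ (forall a, In a (snd m) -> fst a = j -> (snd a <= 1)%nat).
Proof.
  unfold Nw. split.
  - intros H. assert (H1 : cntP (fun v => Nat.eqb (fst v) j) (fst m) = 0%nat) by lia.
    assert (H2 : cntP (fun v => Nat.eqb (fst v) j && Nat.leb 2 (snd v)) (snd m) = 0%nat) by lia.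
    apply cntP_zero in H1; apply cntP_zero in H2. rewrite Forall_forall in *. split.
    + intros a Ha E. specialize (H1 a Ha). rewrite E, Nat.eqb_refl in H1. discriminate.
    + intros a Ha E. specialize (H2 a Ha). rewrite E, Nat.eqb_refl, andb_true_l in H2.
      apply Nat.leb_gt in H2. lia.
  - intros [H1 H2].
    assert (A1 : cntP (fun v => Nat.eqb (fst v) j) (fst m) = 0%nat).
    { apply cntP_zero, Forall_forall. intros a Ha. apply Nat.eqb_neq. apply H1; auto. }
    assert (A2 : cntP (fun v => Nat.eqb (fst v) j && Nat.leb 2 (snd v)) (snd m) = 0%nat).
    { apply cntP_zero, Forall_forall. intros a Ha. destruct (Nat.eqb (fst a) j) eqn:E; auto.
      apply Nat.eqb_eq in E. specialize (H2 a Ha E). rewrite andb_true_l. apply Nat.leb_gt. lia. }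
    rewrite A1, A2; auto.
Qed.

Lemma C_cond_act m : validM n m ->
  ((fst m = [] /\ Forall (fun v => (snd v <= 1)%nat) (snd m)) <-> act m = []).
Proof.
  intros [A [B [C D]]]. rewrite act_nil. split.
  - intros [H1 H2] j Hj. apply Nw_zero_iff. rewrite H1. split; [intros a []|].
    intros a Ha _. rewrite Forall_forall in H2; auto.
  - intros H. split.
    + destruct (fst m) as [|a l] eqn:E; auto. exfalso. rewrite Forall_forall in C.
      assert (Ha : In a (fst m)) by (rewrite E; simpl; auto).
      destruct (C a (or_introl eq_refl)) as [Hn _]. specialize (H _ Hn). apply Nw_zero_iff in H. destruct H as [H _].
      apply (H a Ha); auto.
    + apply Forall_forall. intros a Ha. rewrite Forall_forall in D. specialize (H _ (D a Ha)).
      apply Nw_zero_iff in H. destruct H as [_ H]. apply H; auto.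
Qed.

Lemma Ci_cond_act i m : validM n m ->
  ((Forall (fun v => fst v = i) (fst m) /\ Forall (fun v => (snd v <= 1)%nat \/ fst v = i) (snd m)) <->
   (forall j, (j < n)%nat -> j <> i -> Nw j m = 0%nat)).
Proof.
  intros [A [B [C D]]]. rewrite Forall_forall in *. split.
  - intros [H1 H2] j Hj Hji. apply Nw_zero_iff. rewrite Forall_forall in *. split.
    + intros a Ha E. rewrite (H1 a Ha) in E. auto.
    + intros a Ha E. destruct (H2 a Ha); auto. congruence.
  - intros H. split.
    + intros a Ha. destruct (Nat.eq_dec (fst a) i); auto. exfalso.
      destruct (C a Ha) as [Hn _]. specialize (H _ Hn n0). apply Nw_zero_iff in H. destruct H as [H _].
      apply (H a Ha); auto.
    + try rewrite Forall_forall. intros a Ha. destruct (Nat.eq_dec (fst a) i); auto. left.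
      specialize (H _ (D a Ha) n0). apply Nw_zero_iff in H. destruct H as [_ H]. apply H; auto.
Qed.
End V.


Lemma down_zero (D : nat -> R) a N : (forall k, D k = a * D (S k)) -> (forall k, (N <= k)%nat -> D k = 0) ->
  forall k, D k = 0.
Proof.
  intros H1 H2. assert (forall d k, (N <= k + d)%nat -> D k = 0).
  { induction d; intros k Hk. apply H2; lia. rewrite H1, (IHd (S k)) by lia. ring. }
  intros k. apply (H N k). lia.
Qed.

Lemma sumR_opp k F : sumR k (fun j => - F j) = - sumR k F.
Proof. induction k; simpl; [ring|]. rewrite IHk; ring. Qed.

Lemma poly_id (W : nat -> R) N u : (forall k, (N <= k)%nat -> W k = 0) -> forall l,
  (match l with O => sumR N (fun k => u ^ k * W k)
     | S l' => sumR N (fun k => if Nat.ltb l' k then u ^ (k - 1 - l') * W k else 0) end)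
  - u * sumR N (fun k => if Nat.ltb l k then u ^ (k - 1 - l) * W k else 0) = W l.
Proof.
  intros HW l.
  assert (Hd : forall t, sumR N (fun k => if Nat.eqb k t then W k else 0) = W t).
  { intros t. rewrite sumR_delta. destruct (Nat.ltb t N) eqn:E; auto. apply Nat.ltb_ge in E. rewrite HW; auto. }
  rewrite sumR_scal. unfold Rminus.
  rewrite <- (Hd l).
  transitivity (sumR N (fun k => (match l with O => u ^ k * W k | S l' => if Nat.ltb l' k then u ^ (k - 1 - l') * W k else 0 end)
     + - (u * (if Nat.ltb l k then u ^ (k - 1 - l) * W k else 0)))).
  - rewrite sumR_plus, sumR_opp. f_equal. destruct l; auto.
  - apply sumR_ext. intros k _. destruct l as [|l'].
    + destruct k as [|k]; simpl.
      * ring.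
      * replace (k - 0 - 0)%nat with k by lia. ring.
    + destruct (Nat.ltb l' k) eqn:E1, (Nat.ltb (S l') k) eqn:E2, (Nat.eqb k (S l')) eqn:E3;
        rewrite ?Nat.ltb_lt, ?Nat.ltb_ge, ?Nat.eqb_eq, ?Nat.eqb_neq in *; try lia; try ring.
      * replace (k - 1 - l')%nat with (S (k - 1 - S l')) by lia. simpl. ring.
      * subst. replace (S l' - 1 - l')%nat with 0%nat by lia. simpl. ring.
Qed.

Definition isCb (l : list nat) : bool := match l with [] => true | _ => false end.
Definition isS1b (i : nat) (l : list nat) : bool := match l with [j] => Nat.eqb j i | _ => false end.
Definition isS2b (i k : nat) (l : list nat) : bool :=
  match l with j :: j' :: _ => Nat.eqb j i && Nat.eqb j' k | _ => false end.

Lemma sum_delta_n n j (X : R) : sumR n (fun i => if Nat.eqb j i then X else 0) = if Nat.ltb j n then X else 0.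
Proof.
  rewrite <- (sumR_delta n j (fun _ => X)). apply sumR_ext. intros; rewrite Nat.eqb_sym; auto.
Qed.

Section S.
Variable n : nat.

Lemma decomp x m p :
  x m p = proj n isCb x m p + sumR n (fun i => proj n (isS1b i) x m p)
          + sumR n (fun i => sumR n (fun k => proj n (isS2b i k) x m p)).
Proof.
  unfold proj. destruct (act n m) as [|j [|j' l]] eqn:E; simpl.
  - repeat rewrite (sumR_zero n (fun _ => 0)) by auto. ring.
  - rewrite sum_delta_n. rewrite sumR_zero by (intros; apply sumR_zero; auto).
    assert (Hj : In j (act n m)) by (rewrite E; simpl; auto). apply In_act in Hj.
    replace (Nat.ltb j n) with true by (symmetry; apply Nat.ltb_lt; tauto). ring.
  - rewrite (sumR_zero n (fun _ => 0)) by auto. rewrite !Rplus_0_l.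
    assert (Hj : In j (act n m)) by (rewrite E; simpl; auto). apply In_act in Hj.
    assert (Hj' : In j' (act n m)) by (rewrite E; simpl; auto). apply In_act in Hj'.
    transitivity (sumR n (fun i => if Nat.eqb j i then x m p else 0)).
    + rewrite sum_delta_n. replace (Nat.ltb j n) with true by (symmetry; apply Nat.ltb_lt; tauto). ring.
    + apply sumR_ext. intros i _. destruct (Nat.eqb j i); simpl.
      * rewrite sum_delta_n. replace (Nat.ltb j' n) with true by (symmetry; apply Nat.ltb_lt; tauto). auto.
      * symmetry; apply sumR_zero; auto.
Qed.

Lemma isS1_facts i m : isS1b i (act n m) = true ->
  (i < n)%nat /\ Nw i m <> 0%nat /\ forall j, (j < n)%nat -> j <> i -> Nw j m = 0%nat.
Proof.
  intros H. destruct (act n m) as [|a [|b l]] eqn:E; simpl in H; try discriminate.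
  apply Nat.eqb_eq in H; subst.
  assert (Hj : In i (act n m)) by (rewrite E; simpl; auto). apply In_act in Hj.
  split; [tauto|split; [tauto|]]. intros j Hj' Hne. destruct (Nat.eq_dec (Nw j m) 0); auto.
  assert (In j (act n m)) by (apply In_act; auto). rewrite E in H. simpl in H. destruct H; [congruence|tauto].
Qed.

Lemma isS2_facts i k m : isS2b i k (act n m) = true ->
  i <> k /\ (i < n)%nat /\ (k < n)%nat /\ Nw i m <> 0%nat /\ Nw k m <> 0%nat.
Proof.
  intros H. destruct (act n m) as [|a [|b l]] eqn:E; simpl in H; try discriminate.
  apply andb_true_iff in H; destruct H as [H1 H2]. apply Nat.eqb_eq in H1; apply Nat.eqb_eq in H2; subst.
  assert (Hnd := act_nodup n m). rewrite E in Hnd. inversion Hnd; subst.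
  assert (Hi : In i (act n m)) by (rewrite E; simpl; auto). apply In_act in Hi.
  assert (Hk : In k (act n m)) by (rewrite E; simpl; auto). apply In_act in Hk.
  split; [intros ->; apply H1; simpl; auto|]. tauto.
Qed.

Lemma isC_facts m : isCb (act n m) = true -> act n m = [].
Proof. destruct (act n m); simpl; congruence. Qed.
End S.


Section M.
Variable n : nat.
Variable U : point -> Prop.

Lemma inA_proj P x : inA n U x -> inA n U (proj n P x).
Proof.
  intros H m Hm. unfold proj. destruct (P (act n m)).
  - apply (smooth_ext n U (x m)); auto.
  - apply smooth_const.
Qed.

Lemma inA_hop i x : inA n U x -> inA n U (hop i x).
Proof.
  intros H m Hm. unfold hop, hsum.
  apply (smooth_scal n U (/ INR (Nw i m)) (fun p => sumR (maxs m) (fun s => opB (ww i s) (vv i s) x m p))).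
  apply smooth_sumR. intros s _. unfold opB.
  destruct (inb (ww i s) (fst m)) eqn:E1, (inb (vv i s) (snd m)) eqn:E2; simpl; try apply smooth_const.
  apply smooth_scal. apply H. apply valid_B; auto.
Qed.

Lemma inA_scal (g : point -> R) x : smooth_on n U g -> inA n U x -> inA n U (fun m p => g p * x m p).
Proof. intros Hg H m Hm. apply (smooth_mul n U g (x m)); auto. Qed.

Lemma inA_plus x x' : inA n U x -> inA n U x' -> inA n U (fun m p => x m p + x' m p).
Proof. intros H H' m Hm. apply (smooth_add n U (x m) (x' m)); auto. Qed.

Lemma inA_sum K (F : nat -> elA) : (forall j, (j < K)%nat -> inA n U (F j)) -> inA n U (fun m p => sumR K (fun j => F j m p)).
Proof. intros H m Hm. apply (smooth_sumR n U K (fun j => F j m)). intros j Hj; apply H; auto. Qed.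

Lemma inA_zero : inA n U zeroA.
Proof. intros m Hm. apply smooth_const. Qed.

Lemma inA_if (b : bool) x : inA n U x -> inA n U (fun m p => if b then x m p else 0).
Proof. intros H. destruct b; auto. all: intros m Hm; apply smooth_const. Qed.

Lemma hop_eq0 i x m p : eqA n U x zeroA -> validM n m -> U p -> hop i x m p = 0.
Proof.
  intros H Hm Hp. rewrite (hop_congr n i x (fun _ _ => 0)); auto. apply hop_zero.
Qed.

Lemma dop_eq0 i x m p : eqA n U x zeroA -> validM n m -> U p -> dop i x m p = 0.
Proof.
  intros H Hm Hp. rewrite (dop_congr n i x (fun _ _ => 0)); auto. apply dop_zero.
Qed.

Definition prevL (x : elAl) (l : nat) : elA := match l with O => zeroA | S l' => x l' end.

Lemma Delta_eq f x l m p : DeltaM1 n f x l m p =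
  sumR n (fun j => f j p * (p j * dop j (x l) m p - dop j (prevL x l) m p)).
Proof.
  unfold DeltaM1. apply sumR_ext. intros j _. destruct l; simpl; auto.
  unfold zeroA. rewrite dop_zero; auto.
Qed.

Lemma Delta_zero_dops f x l m p : (forall j, (j < n)%nat -> dop j (x l) m p = 0) ->
  (forall j, (j < n)%nat -> dop j (prevL x l) m p = 0) -> DeltaM1 n f x l m p = 0.
Proof.
  intros H1 H2. rewrite Delta_eq. apply sumR_zero. intros j Hj. rewrite H1, H2; auto. ring.
Qed.

Lemma dop_on_C j c m p : (j < n)%nat -> inC n U c -> validM n m -> U p -> dop j c m p = 0.
Proof.
  intros Hj [_ Hc] Hm Hp. apply (dop_LA n); auto. intros m' Hm' Hnz.
  apply Hc; auto. intros Hcond. apply (C_cond_act n m' Hm') in Hcond.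
  rewrite act_nil in Hcond. apply Hnz, Hcond; auto.
Qed.

Lemma dd_Ci i j y m p : (i < n)%nat -> (j < n)%nat -> inCi n U i y -> validM n m -> U p ->
  dop j (dop i y) m p = 0.
Proof.
  intros Hi Hj [_ Hy] Hm Hp. destruct (Nat.eq_dec j i) as [->|Hne].
  - apply dd_zero. apply valid_wf with n; auto.
  - apply (dop_LA n); auto. intros m' Hm' Hnz. apply (dop_local n); auto.
    intros m'' Hm'' HN. apply Hy; auto. intros Hcond.
    pose proof (proj1 (Ci_cond_act n i m'' Hm'') Hcond) as Hc. apply Hnz. rewrite <- (HN j). apply Hc; auto.
Qed.

Lemma dop_i_Ci_other i j y m p : (j < n)%nat -> j <> i -> inCi n U i y -> validM n m -> U p ->
  Nw j m <> 0%nat -> dop i y m p = 0.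
Proof.
  intros Hj Hne [_ Hy] Hm Hp Hnz. apply (dop_local n); auto.
  intros m'' Hm'' HN. apply Hy; auto. intros Hcond.
  pose proof (proj1 (Ci_cond_act n i m'' Hm'') Hcond) as Hc. apply Hnz. rewrite <- (HN j). apply Hc; auto.
Qed.

End M.


Lemma sum_single n i (F : nat -> R) : (i < n)%nat -> (forall j, (j < n)%nat -> j <> i -> F j = 0) -> sumR n F = F i.
Proof.
  intros Hi H. transitivity (sumR n (fun j => if Nat.eqb j i then F j else 0)).
  - apply sumR_ext. intros j Hj. destruct (Nat.eqb j i) eqn:E; auto. apply H; auto. apply Nat.eqb_neq; auto.
  - rewrite sumR_delta. apply Nat.ltb_lt in Hi. rewrite Hi; auto.
Qed.

Section M.
Variable n : nat.
Variable U : point -> Prop.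
Variable f : nat -> coef.

Lemma claim1 : forall c, inCl n U c -> eqAl n U (DeltaM1 n f c) zeroAl.
Proof.
  intros c [_ Hc] l m Hm p Hp. unfold zeroAl, zeroA. apply Delta_zero_dops; intros j Hj.
  - apply (dop_on_C n U); auto.
  - destruct l; simpl; [apply dop_zero | apply (dop_on_C n U); auto].
Qed.

Lemma claim2 : forall i y, (i < n)%nat -> inCi n U i y -> eqAl n U (DeltaM1 n f (constL (dop i y))) zeroAl.
Proof.
  intros i y Hi Hy l m Hm p Hp. unfold zeroAl, zeroA. apply Delta_zero_dops; intros j Hj.
  - destruct l; simpl; [apply (dd_Ci n U); auto | apply dop_zero].
  - destruct l as [|[|l]]; simpl; [apply dop_zero| apply (dd_Ci n U); auto | apply dop_zero].
Qed.

Lemma C_vanish c m p : inC n U c -> validM n m -> U p -> act n m <> [] -> c m p = 0.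
Proof.
  intros [_ Hc] Hm Hp Ha. apply Hc; auto. intros Hcond. apply Ha. apply (C_cond_act n m Hm); auto.
Qed.

Lemma claim4 : (forall i, (i < n)%nat -> forall p, U p -> f i p <> 0) ->
  forall (c : elAl) (y : nat -> elA) (b : elAl),
     inCl n U c -> (forall i, (i < n)%nat -> inCi n U i (y i)) -> inAl n U b ->
     eqAl n U (combo n c y) (DeltaM1 n f b) ->
     eqAl n U c zeroAl /\ (forall i, (i < n)%nat -> eqA n U (dop i (y i)) zeroA).
Proof.
  intros Hf c y b [_ Hc] Hy [[N HN] _] Hcomb.
  assert (Hc0 : eqAl n U c zeroAl).
  { intros l m Hm p Hp. unfold zeroAl, zeroA.
    destruct (act n m) eqn:E.
    - assert (Hz : forall j, (j < n)%nat -> Nw j m = 0%nat) by (apply (proj1 (act_nil n m)); auto).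
      specialize (Hcomb l m Hm p Hp). unfold combo in Hcomb.
      rewrite Delta_zero_dops in Hcomb.
      2,3: intros j Hj; apply (dop_Nw0 n); auto.
      destruct l; simpl in Hcomb.
      + rewrite sumR_zero in Hcomb by (intros j Hj; apply (dop_Nw0 n); auto). lra.
      + unfold zeroA in Hcomb. lra.
    - apply C_vanish; auto. rewrite E; discriminate. }
  split; auto.
  intros i Hi m Hm p Hp. unfold zeroA.
  destruct (Nat.eq_dec (Nw i m) 0) as [Z|NZ]; [apply (dop_Nw0 n); auto|].
  destruct (classic (exists j, (j < n)%nat /\ j <> i /\ Nw j m <> 0%nat)) as [[j [Hj [Hji Hnz]]]|Hno].
  - apply (dop_i_Ci_other n U i j); auto.
  - assert (Hoth : forall j, (j < n)%nat -> j <> i -> Nw j m = 0%nat).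
    { intros j Hj Hji. destruct (Nat.eq_dec (Nw j m) 0); auto. exfalso; apply Hno; eauto. }
    assert (Hact : act n m <> []).
    { intros E. pose proof (proj1 (act_nil n m) E) as E2. apply NZ, E2; auto. }
    set (D := fun l => dop i (b l) m p).
    assert (HD : forall l, DeltaM1 n f b l m p = f i p * (p i * D l - dop i (prevL b l) m p)).
    { intros l. rewrite Delta_eq, (sum_single n i); [reflexivity|auto|]. intros j Hj Hji.
      rewrite !(dop_Nw0 n) by auto. ring. }
    assert (Hrec : forall l, D l = p i * D (S l)).
    { intros l. specialize (Hcomb (S l) m Hm p Hp). unfold combo in Hcomb. simpl in Hcomb.
      rewrite (Hc0 (S l) m Hm p Hp) in Hcomb. unfold zeroAl, zeroA in Hcomb. rewrite HD in Hcomb.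
      simpl in Hcomb. fold (D (S l)) in Hcomb. fold (D l) in Hcomb.
      assert (f i p * (p i * D (S l) - D l) = 0) by lra.
      apply Rmult_integral in H. destruct H as [H|H]; [exfalso; apply (Hf i Hi p Hp); auto|lra]. }
    assert (HDz : forall l, D l = 0).
    { apply (down_zero D (p i) N); auto. intros k Hk. unfold D. apply (dop_eq0 n U); auto. }
    specialize (Hcomb 0%nat m Hm p Hp). unfold combo in Hcomb. simpl in Hcomb.
    rewrite (Hc0 0%nat m Hm p Hp) in Hcomb. unfold zeroAl, zeroA in Hcomb. rewrite HD in Hcomb.
    simpl in Hcomb. fold (D 0%nat) in Hcomb. rewrite HDz in Hcomb.
    rewrite (sum_single n i) in Hcomb; auto.
    + unfold zeroA in Hcomb. rewrite dop_zero in Hcomb. lra.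
    + intros j Hj Hji. apply (dop_Nw0 n); auto.
Qed.
End M.


Section G.
Variable n : nat.
Variable f : nat -> coef.

Lemma Delta_plus x x' l m p :
  DeltaM1 n f (fun l0 m0 p0 => x l0 m0 p0 + x' l0 m0 p0) l m p = DeltaM1 n f x l m p + DeltaM1 n f x' l m p.
Proof.
  unfold DeltaM1. rewrite <- sumR_plus. apply sumR_ext. intros j _.
  destruct l; cbv beta; rewrite ?dop_plus; ring.
Qed.

Lemma Delta_zeroA l m p : DeltaM1 n f (fun _ => zeroA) l m p = 0.
Proof.
  unfold DeltaM1. apply sumR_zero. intros j _. unfold zeroA. destruct l; rewrite ?dop_zero; ring.
Qed.

Lemma Delta_sum K (F : nat -> elAl) l m p :
  DeltaM1 n f (fun l0 m0 p0 => sumR K (fun i => F i l0 m0 p0)) l m p = sumR K (fun i => DeltaM1 n f (F i) l m p).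
Proof.
  induction K; simpl.
  - apply Delta_zeroA.
  - rewrite (Delta_plus (fun l0 m0 p0 => sumR K (fun i => F i l0 m0 p0)) (F K)). rewrite IHK; auto.
Qed.

Lemma Delta_proj P x l m p : validM n m ->
  DeltaM1 n f (fun l0 => proj n P (x l0)) l m p = proj n P (DeltaM1 n f x l) m p.
Proof.
  intros Hm. unfold proj at 2. unfold DeltaM1.
  destruct (P (act n m)) eqn:E.
  - apply sumR_ext. intros j _. destruct l; rewrite ?dop_proj by auto; unfold proj; rewrite E; auto.
  - apply sumR_zero. intros j _. destruct l; rewrite ?dop_proj by auto; unfold proj; rewrite E; ring.
Qed.

Lemma dh_gen i j X m p : validM n m -> (Nw i m = 0%nat -> X m p = 0) ->
  dop j (hop i X) m p + hop i (dop j X) m p = if Nat.eqb j i then X m p else 0.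
Proof.
  intros Hm HX. destruct (Nat.eqb j i) eqn:E.
  - apply Nat.eqb_eq in E; subst. destruct (Nat.eq_dec (Nw i m) 0) as [Z|NZ].
    + rewrite (dop_Nw0 n) by auto. rewrite hop_Nw0 by auto. rewrite HX; auto. ring.
    + apply dh_id with n; auto.
  - apply Nat.eqb_neq in E. apply dh_anti; auto. apply valid_wf with n; auto.
Qed.
End G.


Section Surj.
Variable n : nat.
Variable U : point -> Prop.
Variable f : nat -> coef.
Variable z : elAl.
Variable N : nat.
Hypothesis HU : forall x, U x -> inRn n x.
Hypothesis Hdist : forall p, U p -> forall i j, (i < n)%nat -> (j < n)%nat -> i <> j -> p i <> p j.
Hypothesis Hfs : forall i, (i < n)%nat -> smooth_on n U (f i).
Hypothesis Hfnz : forall i, (i < n)%nat -> forall p, U p -> f i p <> 0.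
Hypothesis Hz : forall k, inA n U (z k).
Hypothesis HN : forall k, (N <= k)%nat -> eqA n U (z k) zeroA.
Hypothesis HD : eqAl n U (DeltaM1 n f z) zeroAl.

Definition cC (l : nat) : elA := proj n isCb (z l).
Definition ZZ (i l : nat) : elA := proj n (isS1b i) (z l).
Definition wk (i l : nat) : elA := hop i (ZZ i l).
Definition yy (i : nat) : elA := fun m p => sumR N (fun k => p i ^ k * wk i k m p).
Definition QQ (i a : nat) : elA := fun m p => sumR N (fun k => if Nat.ltb a k then p i ^ (k - 1 - a) * wk i k m p else 0).
Definition b1 (i l : nat) : elA := fun m p => (- / f i p) * QQ i l m p.
Definition YY (i k l : nat) : elA := proj n (isS2b i k) (z l).
Definition al (i k : nat) : point -> R := fun p => / (f i p * (p i - p k)).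
Definition be (i k : nat) : point -> R := fun p => - / (f k p * (p i - p k)).
Definition Kop (i k : nat) (x : elA) : elA := fun m p => al i k p * hop i x m p + be i k p * hop k x m p.
Definition b2 (i k l : nat) : elA := if Nat.eqb i k then zeroA else Kop i k (YY i k l).
Definition bb : elAl := fun l m p => sumR n (fun i => b1 i l m p) + sumR n (fun i => sumR n (fun k => b2 i k l m p)).

Lemma proj_deg P l : (N <= l)%nat -> eqA n U (proj n P (z l)) zeroA.
Proof. intros Hl m Hm p Hp. unfold proj. destruct (P (act n m)); auto. apply HN; auto. Qed.

Lemma wk_deg i l m p : (N <= l)%nat -> validM n m -> U p -> wk i l m p = 0.
Proof. intros Hl Hm Hp. unfold wk. apply (hop_eq0 n U); auto. apply proj_deg; auto. Qed.

Lemma ZZ_vanish i j l m p : validM n m -> (j < n)%nat -> j <> i -> Nw j m <> 0%nat -> ZZ i l m p = 0.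
Proof.
  intros Hm Hj Hji Hnz. unfold ZZ, proj. destruct (isS1b i (act n m)) eqn:E; auto.
  apply isS1_facts in E. destruct E as [_ [_ E]]. exfalso; apply Hnz, E; auto.
Qed.

Lemma wk_vanish i j l m p : validM n m -> (j < n)%nat -> j <> i -> Nw j m <> 0%nat -> wk i l m p = 0.
Proof.
  intros Hm Hj Hji Hnz. unfold wk. apply (hop_local n); auto. intros m'' Hm'' HN'.
  apply (ZZ_vanish i j); auto. rewrite HN'; auto.
Qed.

Lemma dZ_zero i l m p : (i < n)%nat -> validM n m -> U p -> dop i (ZZ i l) m p = 0.
Proof.
  intros Hi Hm Hp. set (D := fun l => dop i (ZZ i l) m p).
  assert (HDl : forall l, DeltaM1 n f (fun l0 => ZZ i l0) l m p = f i p * (p i * D l - dop i (prevL (fun l0 => ZZ i l0) l) m p)).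
  { intros l0. rewrite (Delta_eq n), (sum_single n i); [reflexivity|auto|].
    intros j Hj Hji. rewrite !(dop_LA n j); [ring| auto | | auto |].
    - intros m'' Hm'' Hnz. destruct l0; simpl. unfold zeroA; auto. apply (ZZ_vanish i j); auto.
    - intros m'' Hm'' Hnz. apply (ZZ_vanish i j); auto. }
  assert (HD0 : forall l, DeltaM1 n f (fun l0 => ZZ i l0) l m p = 0).
  { intros l0. unfold ZZ. rewrite (Delta_proj n f (isS1b i) z l0 m p Hm). unfold proj.
    destruct (isS1b i (act n m)); auto. apply HD; auto. }
  assert (Hrec : forall l, D l = p i * D (S l)).
  { intros l0. specialize (HD0 (S l0)). rewrite HDl in HD0. simpl in HD0. fold (D (S l0)) in HD0. fold (D l0) in HD0.
    apply Rmult_integral in HD0. destruct HD0 as [H|H]; [exfalso; apply (Hfnz i Hi p Hp); auto|lra]. }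
  apply (down_zero D (p i) N Hrec). intros k Hk. unfold D. apply (dop_eq0 n U); auto. apply proj_deg; auto.
Qed.

Lemma ZZ_eq_dw i l m p : (i < n)%nat -> validM n m -> U p -> ZZ i l m p = dop i (wk i l) m p.
Proof.
  intros Hi Hm Hp. destruct (Nat.eq_dec (Nw i m) 0) as [Z|NZ].
  - rewrite (dop_Nw0 n) by auto. unfold ZZ, proj. destruct (isS1b i (act n m)) eqn:E; auto.
    apply isS1_facts in E. destruct E as [_ [E _]]. contradiction.
  - rewrite <- (dh_id i (ZZ i l) m p n Hm NZ). unfold wk.
    rewrite (hop_congr n i (dop i (ZZ i l)) (fun _ _ => 0)); auto.
    + rewrite hop_zero; ring.
    + intros m' Hm'. apply dZ_zero; auto.
Qed.

Lemma dop_wk_deg i k m p : (N <= k)%nat -> validM n m -> U p -> dop i (wk i k) m p = 0.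
Proof.
  intros Hk Hm Hp. rewrite (dop_congr n i (wk i k) (fun _ _ => 0)); auto. apply dop_zero.
  intros m' Hm'. apply wk_deg; auto.
Qed.

Lemma dop_QQ i a m p : dop i (QQ i a) m p =
  sumR N (fun k => if Nat.ltb a k then p i ^ (k - 1 - a) * dop i (wk i k) m p else 0).
Proof.
  unfold QQ. rewrite (dop_sum i N (fun k m0 p0 => if Nat.ltb a k then p0 i ^ (k - 1 - a) * wk i k m0 p0 else 0)).
  apply sumR_ext. intros k _. destruct (Nat.ltb a k).
  - apply (dop_scal i (fun p0 => p0 i ^ (k - 1 - a)) (wk i k)).
  - apply dop_zero.
Qed.

Lemma dop_yy i m p : dop i (yy i) m p = sumR N (fun k => p i ^ k * dop i (wk i k) m p).
Proof.
  unfold yy. rewrite (dop_sum i N (fun k m0 p0 => p0 i ^ k * wk i k m0 p0)).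
  apply sumR_ext. intros k _. apply (dop_scal i (fun p0 => p0 i ^ k) (wk i k)).
Qed.

Lemma b1_vanish i j l m p : validM n m -> (j < n)%nat -> j <> i -> Nw j m <> 0%nat -> b1 i l m p = 0.
Proof.
  intros Hm Hj Hji Hnz. unfold b1, QQ. rewrite sumR_zero; [ring|]. intros k _.
  destruct (Nat.ltb l k); auto. rewrite (wk_vanish i j); auto. ring.
Qed.

Lemma S1_eq i l m p : (i < n)%nat -> validM n m -> U p ->
  ZZ i l m p = (match l with O => dop i (yy i) m p | S _ => 0 end) + DeltaM1 n f (b1 i) l m p.
Proof.
  intros Hi Hm Hp.
  assert (HDl : DeltaM1 n f (b1 i) l m p = f i p * (p i * dop i (b1 i l) m p - dop i (prevL (b1 i) l) m p)).
  { rewrite (Delta_eq n), (sum_single n i); [reflexivity|auto|].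
    intros j Hj Hji. rewrite !(dop_LA n j); [ring| auto | | auto |].
    - intros m'' Hm'' Hnz. destruct l; simpl. unfold zeroA; auto. apply (b1_vanish i j); auto.
    - intros m'' Hm'' Hnz. apply (b1_vanish i j); auto. }
  rewrite HDl. rewrite ZZ_eq_dw by auto.
  set (W := fun k => dop i (wk i k) m p).
  assert (HW : forall k, (N <= k)%nat -> W k = 0) by (intros; apply dop_wk_deg; auto).
  pose proof (poly_id W N (p i) HW l) as PI.
  assert (Eb : forall a, dop i (b1 i a) m p = - / f i p * sumR N (fun k => if Nat.ltb a k then p i ^ (k - 1 - a) * W k else 0)).
  { intros a. unfold b1. rewrite (dop_scal i (fun p0 => - / f i p0) (QQ i a)). rewrite dop_QQ. auto. }
  assert (fnz := Hfnz i Hi p Hp).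
  destruct l as [|l'].
  - simpl. unfold zeroA. rewrite dop_zero. rewrite dop_yy. fold W. rewrite Eb.
    change (dop i (wk i 0) m p) with (W 0%nat).
    change (sumR N (fun k => p i ^ k * dop i (wk i k) m p)) with (sumR N (fun k => p i ^ k * W k)).
    rewrite <- PI. field. auto.
  - simpl. rewrite !Eb. change (dop i (wk i (S l')) m p) with (W (S l')). rewrite <- PI. field. auto.
Qed.


Lemma sumR_lin2 K (A B : nat -> R) a b :
  sumR K (fun j => a * A j - b * B j) = a * sumR K A - b * sumR K B.
Proof. induction K; simpl; [ring|]. rewrite IHK; ring. Qed.

Lemma hop_Dlike i K (G H : nat -> point -> R) (x x' : nat -> elA) m p :
  hop i (fun m0 p0 => sumR K (fun j => G j p0 * (H j p0 * x j m0 p0 - x' j m0 p0))) m p =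
  sumR K (fun j => G j p * (H j p * hop i (x j) m p - hop i (x' j) m p)).
Proof.
  unfold hop, hsum.
  transitivity (/ INR (Nw i m) * sumR (maxs m) (fun s => sumR K (fun j =>
     G j p * (H j p * opB (ww i s) (vv i s) (x j) m p - opB (ww i s) (vv i s) (x' j) m p)))).
  - f_equal. apply sumR_ext. intros s _. unfold opB.
    destruct (inb (ww i s) (fst m) && negb (inb (vv i s) (snd m))).
    + rewrite sumR_scal. apply sumR_ext. intros; ring.
    + symmetry; apply sumR_zero; intros; ring.
  - rewrite sumR_swap, sumR_scal. apply sumR_ext. intros j _.
    rewrite (sumR_ext _ _ (fun s => (G j p * H j p) * opB (ww i s) (vv i s) (x j) m p - G j p * opB (ww i s) (vv i s) (x' j) m p))
      by (intros; ring).
    rewrite sumR_lin2. ring.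
Qed.

Lemma sumR_lin3 K (A B C : nat -> R) a b :
  sumR K (fun j => A j - a * B j - b * C j) = sumR K A - a * sumR K B - b * sumR K C.
Proof. induction K; simpl; [ring|]. rewrite IHK; ring. Qed.

Lemma YY_vanish i k l m p : (Nw i m = 0%nat \/ Nw k m = 0%nat) -> YY i k l m p = 0.
Proof.
  intros H. unfold YY, proj. destruct (isS2b i k (act n m)) eqn:E; auto.
  apply isS2_facts in E. destruct E as [_ [_ [_ [E1 E2]]]]. destruct H; contradiction.
Qed.

Lemma S2_eq i k l m p : (i < n)%nat -> (k < n)%nat -> validM n m -> U p ->
  YY i k l m p = DeltaM1 n f (b2 i k) l m p.
Proof.
  intros Hi Hk Hm Hp. destruct (Nat.eq_dec i k) as [<-|Hne].
  - unfold b2. rewrite Nat.eqb_refl. rewrite Delta_zeroA.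
    unfold YY, proj. destruct (isS2b i i (act n m)) eqn:E; auto.
    apply isS2_facts in E. tauto.
  - assert (Ebk : b2 i k = fun l0 => Kop i k (YY i k l0)).
    { unfold b2. apply Nat.eqb_neq in Hne. rewrite Hne. auto. }
    rewrite Ebk. rewrite (Delta_eq n).
    set (Yp := prevL (YY i k) l).
    assert (HYp : forall m', Nw i m' = 0%nat \/ Nw k m' = 0%nat -> Yp m' p = 0).
    { intros m' H. unfold Yp. destruct l; simpl; [unfold zeroA; auto|]. apply YY_vanish; auto. }
    assert (Hprev : forall j, dop j (prevL (fun l0 => Kop i k (YY i k l0)) l) m p = dop j (Kop i k Yp) m p).
    { intros j. apply (dop_congr n); auto. intros m' Hm'. unfold Yp. destruct l; simpl; auto.
      unfold Kop, zeroA. rewrite !hop_zero. ring. }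
    assert (HK : forall j X, (forall m', Nw i m' = 0%nat \/ Nw k m' = 0%nat -> X m' p = 0) ->
       dop j (Kop i k X) m p = al i k p * ((if Nat.eqb j i then X m p else 0) - hop i (dop j X) m p)
                             + be i k p * ((if Nat.eqb j k then X m p else 0) - hop k (dop j X) m p)).
    { intros j X HX. unfold Kop.
      rewrite (dop_plus j (fun m0 p0 => al i k p0 * hop i X m0 p0) (fun m0 p0 => be i k p0 * hop k X m0 p0)).
      rewrite (dop_scal j (al i k) (hop i X)), (dop_scal j (be i k) (hop k X)).
      rewrite <- (dh_gen n i j X m p), <- (dh_gen n k j X m p); auto; ring. }
    rewrite (sumR_ext _ _ (fun j =>
      f j p * (p j * ((al i k p * (if Nat.eqb j i then 1 else 0) + be i k p * (if Nat.eqb j k then 1 else 0)) * YY i k l m p)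
                - (al i k p * (if Nat.eqb j i then 1 else 0) + be i k p * (if Nat.eqb j k then 1 else 0)) * Yp m p)
      - al i k p * (f j p * (p j * hop i (dop j (YY i k l)) m p - hop i (dop j Yp) m p))
      - be i k p * (f j p * (p j * hop k (dop j (YY i k l)) m p - hop k (dop j Yp) m p)))).
    2: { intros j Hj. rewrite Hprev. rewrite !HK; auto.
         - destruct (Nat.eqb j i), (Nat.eqb j k); ring.
         - intros; apply YY_vanish; auto. }
    rewrite sumR_lin3.
    assert (HT : forall a, (a < n)%nat ->
      sumR n (fun j => f j p * (p j * hop a (dop j (YY i k l)) m p - hop a (dop j Yp) m p)) = 0).
    { intros a Ha. rewrite <- (hop_Dlike a n (fun j p0 => f j p0) (fun j p0 => p0 j) (fun j => dop j (YY i k l)) (fun j => dop j Yp)).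
      rewrite (hop_congr n a _ (fun _ _ => 0)); [apply hop_zero|auto|].
      intros m' Hm'. transitivity (DeltaM1 n f (YY i k) l m' p).
      - rewrite (Delta_eq n). auto.
      - unfold YY. rewrite (Delta_proj n f (isS2b i k) z l m' p Hm'). unfold proj.
        destruct (isS2b i k (act n m')); auto. apply HD; auto. }
    rewrite !HT by auto. rewrite !Rmult_0_r, !Rminus_0_r.
    transitivity (sumR n (fun j => (if Nat.eqb i j then f i p * (p i * al i k p * YY i k l m p - al i k p * Yp m p) else 0)
                                 + (if Nat.eqb k j then f k p * (p k * be i k p * YY i k l m p - be i k p * Yp m p) else 0))).
    2: { apply sumR_ext. intros j _.
         destruct (Nat.eq_dec j i) as [->|H1]; [destruct (Nat.eq_dec i k) as [->|H2]|destruct (Nat.eq_dec j k) as [->|H2]];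
           try congruence; rewrite ?Nat.eqb_refl;
           repeat match goal with |- context [Nat.eqb ?a ?b] => (rewrite (proj2 (Nat.eqb_neq a b)) by congruence) end;
           ring. }
    rewrite sumR_plus, !sum_delta_n.
    apply Nat.ltb_lt in Hi. apply Nat.ltb_lt in Hk. rewrite Hi, Hk.
    assert (f1 := Hfnz i (proj1 (Nat.ltb_lt _ _) Hi) p Hp).
    assert (f2 := Hfnz k (proj1 (Nat.ltb_lt _ _) Hk) p Hp).
    assert (d := Hdist p Hp i k (proj1 (Nat.ltb_lt _ _) Hi) (proj1 (Nat.ltb_lt _ _) Hk) Hne).
    assert (d' : p i - p k <> 0) by (intros E; apply d; lra).
    unfold al, be. field. auto.
Qed.


Lemma smooth_coordU i : (i < n)%nat -> smooth_on n U (fun x => x i).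
Proof. intros Hi. apply smooth_coord; auto. Qed.

Lemma al_smooth i k : (i < n)%nat -> (k < n)%nat -> i <> k -> smooth_on n U (al i k).
Proof.
  intros Hi Hk Hne. unfold al.
  apply (smooth_inv n U (fun p => f i p * (p i - p k))).
  - apply (smooth_mul n U (f i) (fun p => p i - p k)); auto.
    apply (smooth_ext n U (fun p => p i + (-1) * p k)); [intros; ring|].
    apply (smooth_add n U (fun p => p i) (fun p => (-1) * p k)); [apply smooth_coordU; auto|].
    apply smooth_scal. apply smooth_coordU; auto.
  - intros x Hx. apply Rmult_integral_contrapositive. split; [apply Hfnz; auto|].
    intros E. apply (Hdist x Hx i k); auto. lra.
Qed.

Lemma be_smooth i k : (i < n)%nat -> (k < n)%nat -> i <> k -> smooth_on n U (be i k).
Proof.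
  intros Hi Hk Hne. unfold be.
  apply (smooth_ext n U (fun p => (-1) * / (f k p * (p i - p k)))); [intros; ring|].
  apply smooth_scal. apply (smooth_inv n U (fun p => f k p * (p i - p k))).
  - apply (smooth_mul n U (f k) (fun p => p i - p k)); auto.
    apply (smooth_ext n U (fun p => p i + (-1) * p k)); [intros; ring|].
    apply (smooth_add n U (fun p => p i) (fun p => (-1) * p k)); [apply smooth_coordU; auto|].
    apply smooth_scal. apply smooth_coordU; auto.
  - intros x Hx. apply Rmult_integral_contrapositive. split; [apply Hfnz; auto|].
    intros E. apply (Hdist x Hx i k); auto. lra.
Qed.

Lemma inA_wk i l : inA n U (wk i l).
Proof. unfold wk. apply inA_hop. apply inA_proj. apply Hz. Qed.

Lemma cC_ok : inCl n U cC.
Proof.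
  split; [split|].
  - exists N. intros k Hk. apply proj_deg; auto.
  - intros k. apply inA_proj, Hz.
  - intros k. split; [apply inA_proj, Hz|].
    intros m Hm Hcond p Hp. unfold cC, proj. destruct (isCb (act n m)) eqn:E; auto.
    exfalso. apply Hcond. apply (C_cond_act n m Hm). apply isC_facts; auto.
Qed.

Lemma yy_ok i : (i < n)%nat -> inCi n U i (yy i).
Proof.
  intros Hi. split.
  - unfold yy. apply (inA_sum n U N (fun k m p => p i ^ k * wk i k m p)). intros k _.
    apply (inA_scal n U (fun p => p i ^ k)); [apply smooth_pow, smooth_coordU; auto|apply inA_wk].
  - intros m Hm Hcond p Hp.
    assert (Hex : exists j, (j < n)%nat /\ j <> i /\ Nw j m <> 0%nat).
    { apply NNPP. intros Hno. apply Hcond. apply (Ci_cond_act n i m Hm). intros j Hj Hji.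
      destruct (Nat.eq_dec (Nw j m) 0); auto. exfalso; apply Hno; eauto. }
    destruct Hex as [j [Hj [Hji Hnz]]].
    unfold yy. apply sumR_zero. intros k _. rewrite (wk_vanish i j); auto. ring.
Qed.

Lemma bb_ok : inAl n U bb.
Proof.
  split.
  - exists N. intros l Hl m Hm p Hp. unfold bb, zeroA.
    rewrite sumR_zero, sumR_zero; [ring| |].
    + intros i Hi. apply sumR_zero. intros k Hk. unfold b2. destruct (Nat.eqb i k); [unfold zeroA; auto|].
      unfold Kop. rewrite !(hop_eq0 n U); auto; try ring; apply proj_deg; auto.
    + intros i Hi. unfold b1, QQ. rewrite sumR_zero; [ring|]. intros k Hk.
      destruct (Nat.ltb l k) eqn:E; auto. apply Nat.ltb_lt in E. lia.
  - intros l. unfold bb.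
    apply (inA_plus n U (fun m p => sumR n (fun i => b1 i l m p))).
    + apply (inA_sum n U n (fun i m p => b1 i l m p)). intros i Hi. unfold b1.
      apply (inA_scal n U (fun p => - / f i p)).
      * apply (smooth_ext n U (fun p => (-1) * / f i p)); [intros; ring|]. apply smooth_scal.
        apply smooth_inv; auto.
      * unfold QQ. apply (inA_sum n U N (fun k m p => if Nat.ltb l k then p i ^ (k - 1 - l) * wk i k m p else 0)).
        intros k _. apply (inA_if n U (Nat.ltb l k) (fun m p => p i ^ (k - 1 - l) * wk i k m p)).
        apply (inA_scal n U (fun p => p i ^ (k - 1 - l))); [apply smooth_pow, smooth_coordU; auto|apply inA_wk].
    + apply (inA_sum n U n (fun i m p => sumR n (fun k => b2 i k l m p))). intros i Hi.
      apply (inA_sum n U n (fun k m p => b2 i k l m p)). intros k Hk.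
      unfold b2. destruct (Nat.eqb i k) eqn:E; [apply inA_zero|]. apply Nat.eqb_neq in E.
      unfold Kop. apply (inA_plus n U (fun m p => al i k p * hop i (YY i k l) m p)).
      * apply (inA_scal n U (al i k)); [apply al_smooth; auto|]. apply inA_hop, inA_proj, Hz.
      * apply (inA_scal n U (be i k)); [apply be_smooth; auto|]. apply inA_hop, inA_proj, Hz.
Qed.

Lemma surj_eq : eqAl n U z (addAl (combo n cC yy) (DeltaM1 n f bb)).
Proof.
  intros l m Hm p Hp. unfold addAl, combo, bb.
  rewrite (Delta_plus n f (fun l0 m0 p0 => sumR n (fun i => b1 i l0 m0 p0))
                         (fun l0 m0 p0 => sumR n (fun i => sumR n (fun k => b2 i k l0 m0 p0)))).
  rewrite (Delta_sum n f n b1).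
  rewrite (Delta_sum n f n (fun i l0 m0 p0 => sumR n (fun k => b2 i k l0 m0 p0))).
  rewrite (sumR_ext n (fun i => DeltaM1 n f (fun l0 m0 p0 => sumR n (fun k => b2 i k l0 m0 p0)) l m p)
                      (fun i => sumR n (fun k => DeltaM1 n f (b2 i k) l m p)))
    by (intros i _; apply (Delta_sum n f n (fun k l0 m0 p0 => b2 i k l0 m0 p0))).
  rewrite (decomp n (z l) m p).
  rewrite (sumR_ext n (fun i => proj n (isS1b i) (z l) m p)
                      (fun i => (match l with O => dop i (yy i) m p | S _ => 0 end) + DeltaM1 n f (b1 i) l m p))
    by (intros i Hi; apply S1_eq; auto).
  rewrite (sumR_ext n (fun i => sumR n (fun k => proj n (isS2b i k) (z l) m p))
                      (fun i => sumR n (fun k => DeltaM1 n f (b2 i k) l m p))).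
  2: { intros i Hi. apply sumR_ext. intros k Hk. apply S2_eq; auto. }
  rewrite sumR_plus. fold (cC l).
  destruct l; simpl.
  - ring.
  - unfold zeroA. rewrite (sumR_zero n (fun _ => 0)) by auto. ring.
Qed.

End Surj.


Theorem proposition3p1 (n : nat) (U : point -> Prop) (f : nat -> coef) :
  (1 <= n)%nat ->
  is_domain n U ->
  (forall p, U p -> forall i j, (i < n)%nat -> (j < n)%nat -> i <> j -> p i <> p j) ->
  (forall i, (i < n)%nat -> smooth_on n U (f i)) ->
  (forall i, (i < n)%nat -> forall p, U p -> f i p <> 0) ->
  (* every element of \hat C[lambda] is a cocycle *)
  (forall c, inCl n U c -> eqAl n U (DeltaM1 n f c) zeroAl) /\
  (* every element of d_i(\hat C_i) is a cocycle *)
  (forall i y, (i < n)%nat -> inCi n U i y ->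
     eqAl n U (DeltaM1 n f (constL (dop i y))) zeroAl) /\
  (* surjectivity onto cohomology *)
  (forall z, inAl n U z -> eqAl n U (DeltaM1 n f z) zeroAl ->
     exists (c : elAl) (y : nat -> elA) (b : elAl),
       inCl n U c /\ (forall i, (i < n)%nat -> inCi n U i (y i)) /\ inAl n U b /\
       eqAl n U z (addAl (combo n c y) (DeltaM1 n f b))) /\
  (* injectivity: the direct sum meets the coboundaries only in 0 *)
  (forall (c : elAl) (y : nat -> elA) (b : elAl),
     inCl n U c -> (forall i, (i < n)%nat -> inCi n U i (y i)) -> inAl n U b ->
     eqAl n U (combo n c y) (DeltaM1 n f b) ->
     eqAl n U c zeroAl /\ (forall i, (i < n)%nat -> eqA n U (dop i (y i)) zeroA)).
Proof.
  intros Hn Hdom Hdist Hfs Hfnz. destruct Hdom as [HU _].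
  split; [apply claim1|]. split; [apply claim2|]. split.
  - intros z [[N HN] Hz] HD. exists (cC n z), (yy n z N), (bb n f z N).
    split; [|split; [|split]].
    + apply (cC_ok n U z N); auto.
    + intros i Hi. apply (yy_ok n U z N); auto.
    + apply (bb_ok n U f z N); auto.
    + apply (surj_eq n U f z N); auto.
  - apply claim4; auto.
Qed.
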